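(* For every $1<p<\infty$ there exists a curve $\Gamma$ in $\ell_p$ such that $\mathcal{H}^1(\Gamma)<\infty$ and $S_{\Gamma,p-\epsilon}(\mathscr{G})=\infty$ for every multiresolution family $\mathscr{G}$ for $\Gamma$ (of any inflation factor $>1$) and every $\epsilon\in(0,p)$.
   Context: $\ell_p$ is the real Banach space of $p$-summable sequences with norm $|x|_p=(\sum_i|x_i|^p)^{1/p}$; $\mathcal{H}^1$ is computed with respect to this norm. For a nonempty set $E\subset\ell_p$ and a set $Q$ of positive diameter, the Jones beta number is $\beta_E(Q)=\inf_L\sup_{x\in E\cap Q}\mathrm{dist}(x,L)/\mathrm{diam}\,Q$ if $E\cap Q\neq\emptyset$, where $L$ ranges over all one-dimensional affine subspaces (lines), and $\beta_E(Q)=0$ if $E\cap Q=\emptyset$. For $\rho>0$, a $\rho$-net for $E$ is a set $X\subset E$ such that $|y-z|\geq\rho$ for all distinct $y,z\in X$ and $\mathrm{dist}(x,X)<\rho$ for all $x\in E$. A multiresolution family for $E$ with inflation factor $A>1$ is the collection of closed balls $\mathscr{G}=\{B(x,A2^{-k}):x\in X_k,\ k\in\mathbb{Z}\}$ (indexed by the pairs $(k,x)$), where $(X_k)_{k\in\mathbb{Z}}$ is a nested family ($X_k\subset X_{k+1}$) and each $X_k$ is a $2^{-k}$-net for $E$. For $0<r<\infty$, $S_{E,r}(\mathscr{G})=\mathrm{diam}\,E+\sum_{Q\in\mathscr{G}}\beta_E(Q)^r\,\mathrm{diam}\,Q$. A curve is the image of a continuous map from $[0,1]$. *)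

(* Defs.v *)
From Stdlib Require Import Reals Lra ZArith List Classical ClassicalEpsilon FunctionalExtensionality.
Open Scope R_scope.

Inductive ER : Type := Fin (r : R) | PInf.

Definition er_le (a b : ER) : Prop :=
  match a, b with
  | Fin x, Fin y => x <= y
  | _, PInf => True
  | PInf, Fin _ => False
  end.
Definition er_lt (a b : ER) : Prop :=
  match a, b with
  | Fin x, Fin y => x < y
  | Fin _, PInf => True
  | PInf, _ => False
  end.
Definition er_add (a b : ER) : ER :=
  match a, b with
  | Fin x, Fin y => Fin (x + y)
  | _, _ => PInf
  end.
(* real part; only applied to values that are finite *)
Definition er_real (a : ER) : R := match a with Fin x => x | PInf => 0 end.

(** Supremum of a set of extended reals (sup of the empty set is 0; all uses
    are for sets of nonnegative quantities). *)
Definition esup (S : ER -> Prop) : ER :=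
  if excluded_middle_informative (S PInf) then PInf else
  if excluded_middle_informative
       ((exists r, S (Fin r)) /\ bound (fun r => S (Fin r)))
  then Fin (epsilon (inhabits 0) (fun m => is_lub (fun r => S (Fin r)) m))
  else if excluded_middle_informative (exists r, S (Fin r)) then PInf
  else Fin 0.

(** Infimum of a set of extended reals (inf of the empty set is +infinity;
    all uses are for sets of nonnegative quantities, bounded below by 0). *)
Definition einf (S : ER -> Prop) : ER :=
  if excluded_middle_informative (exists r, S (Fin r))
  then Fin (- epsilon (inhabits 0) (fun m => is_lub (fun r => S (Fin (- r))) m))
  else PInf.

Definition einfR (S : R -> Prop) : ER := einf (fun e => exists r, S r /\ e = Fin r).

Definition esum {I : Type} (P : I -> Prop) (f : I -> ER) : ER :=
  esup (fun e => exists l : list I, NoDup l /\ Forall P l /\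
                   e = fold_right er_add (Fin 0) (map f l)).

Definition seqR := nat -> R.

(* x^a for x >= 0 (with 0^a = 0, used only for a > 0) *)
Definition rpow (x a : R) : R := if Rlt_dec 0 x then Rpower x a else 0.

Definition sumR (f : nat -> R) : R := epsilon (inhabits 0) (fun l => infinite_sum f l).

Definition in_lp (p : R) (x : seqR) : Prop :=
  exists l, infinite_sum (fun i => rpow (Rabs (x i)) p) l.

Definition lpnorm (p : R) (x : seqR) : R :=
  rpow (sumR (fun i => rpow (Rabs (x i)) p)) (/ p).

Definition vadd (x y : seqR) : seqR := fun i => x i + y i.
Definition vsub (x y : seqR) : seqR := fun i => x i - y i.
Definition vscale (t : R) (x : seqR) : seqR := fun i => t * x i.
Definition vzero : seqR := fun _ => 0.

Definition ldist (p : R) (x y : seqR) : R := lpnorm p (vsub x y).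

Definition diam (p : R) (E : seqR -> Prop) : ER :=
  esup (fun e => exists x y, E x /\ E y /\ e = Fin (ldist p x y)).

Definition dist_set (p : R) (x : seqR) (S : seqR -> Prop) : ER :=
  einfR (fun r => exists y, S y /\ r = ldist p x y).

Definition is_line (p : R) (L : seqR -> Prop) : Prop :=
  exists a v, in_lp p a /\ in_lp p v /\ v <> vzero /\
    forall y, L y <-> exists t, y = vadd a (vscale t v).

Definition beta (p : R) (E Q : seqR -> Prop) : R :=
  if excluded_middle_informative (exists x, E x /\ Q x) then
    er_real (einfR (fun b => exists L, is_line p L /\
      b = er_real (esup (fun e => exists x, E x /\ Q x /\
                                   e = Fin (er_real (dist_set p x L))))
          / er_real (diam p Q)))
  else 0.

Definition cball (p : R) (c : seqR) (r : R) : seqR -> Prop :=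
  fun y => in_lp p y /\ ldist p y c <= r.

Definition is_net (p : R) (E : seqR -> Prop) (rho : R) (X : seqR -> Prop) : Prop :=
  (forall x, X x -> E x) /\
  (forall y z, X y -> X z -> y <> z -> rho <= ldist p y z) /\
  (forall x, E x -> er_lt (dist_set p x X) (Fin rho)).

(** multiresolution family data: inflation factor A and nested nets X_k *)
Definition is_MRF (p : R) (E : seqR -> Prop) (A : R) (X : Z -> seqR -> Prop) : Prop :=
  1 < A /\
  (forall k x, X k x -> X (k + 1)%Z x) /\
  (forall k, is_net p E (powerRZ 2 (- k)) (X k)).

(** S_{E,r}(G) for the family G = {B(x, A 2^-k) : x in X_k, k in Z},
    indexed by the pairs (k,x) *)
Definition S_val (p : R) (E : seqR -> Prop) (r A : R) (X : Z -> seqR -> Prop) : ER :=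
  er_add (diam p E)
    (esum (fun kx : Z * seqR => X (fst kx) (snd kx))
          (fun kx => let Q := cball p (snd kx) (A * powerRZ 2 (- fst kx)) in
                     Fin (rpow (beta p E Q) r * er_real (diam p Q)))).

(** one-dimensional Hausdorff measure (unnormalized; normalization does not
    affect finiteness) *)
Definition H1_delta (p : R) (E : seqR -> Prop) (delta : R) : ER :=
  einf (fun e => exists U : nat -> seqR -> Prop,
          (forall n y, U n y -> in_lp p y) /\
          (forall x, E x -> exists n, U n x) /\
          (forall n, er_le (diam p (U n)) (Fin delta)) /\
          e = esum (fun _ : nat => True) (fun n => diam p (U n))).

Definition H1 (p : R) (E : seqR -> Prop) : ER :=
  esup (fun e => exists delta, 0 < delta /\ e = H1_delta p E delta).

Definition is_curve_param (p : R) (g : R -> seqR) : Prop :=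
  (forall t, 0 <= t <= 1 -> in_lp p (g t)) /\
  (forall t, 0 <= t <= 1 -> forall eps, 0 < eps ->
     exists d, 0 < d /\ forall s, 0 <= s <= 1 -> Rabs (s - t) < d ->
       ldist p (g s) (g t) < eps).

Definition image01 (g : R -> seqR) : seqR -> Prop :=
  fun y => exists t, 0 <= t <= 1 /\ y = g t.

(* Main.v *)
Require Import Defs.
From Stdlib Require Import Reals ZArith.
From Stdlib Require Import Lra Lia List Classical ClassicalEpsilon FunctionalExtensionality.
Open Scope R_scope.

Lemma esup_fin (S : ER -> Prop) :
  ~ S PInf -> (exists r, S (Fin r)) -> bound (fun r => S (Fin r)) ->
  exists m, esup S = Fin m /\ is_lub (fun r => S (Fin r)) m.
Proof.
  intros H1 H2 H3. unfold esup.
  destruct (excluded_middle_informative (S PInf)) as [h|h]; [contradiction|].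
  destruct (excluded_middle_informative
       ((exists r, S (Fin r)) /\ bound (fun r => S (Fin r)))) as [h'|h'].
  - eexists; split; [reflexivity|].
    apply epsilon_spec. destruct (completeness _ H3 H2) as [m Hm]. exists m; exact Hm.
  - exfalso; apply h'; split; assumption.
Qed.

Lemma esup_inf (S : ER -> Prop) :
  (exists r, S (Fin r)) -> ~ bound (fun r => S (Fin r)) -> esup S = PInf.
Proof.
  intros H2 H3. unfold esup.
  destruct (excluded_middle_informative (S PInf)) as [h|h]; [reflexivity|].
  destruct (excluded_middle_informative
       ((exists r, S (Fin r)) /\ bound (fun r => S (Fin r)))) as [h'|h'].
  - destruct h'; contradiction.
  - destruct (excluded_middle_informative (exists r, S (Fin r))); [reflexivity|contradiction].
Qed.

Lemma esup_ge0 (S : ER -> Prop) x : S (Fin 0) -> esup S = Fin x -> 0 <= x.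
Proof.
  intros H0 He. unfold esup in He.
  destruct (excluded_middle_informative (S PInf)) as [h|h]; [discriminate|].
  destruct (excluded_middle_informative
       ((exists r, S (Fin r)) /\ bound (fun r => S (Fin r)))) as [h'|h'].
  - injection He as <-. destruct h' as [_ hb].
    assert (Hl: exists m, is_lub (fun r => S (Fin r)) m).
    { destruct (completeness _ hb (ex_intro _ 0 H0)) as [m Hm]; exists m; exact Hm. }
    pose proof (epsilon_spec (inhabits 0) _ Hl) as [Hu _]. apply Hu; exact H0.
  - destruct (excluded_middle_informative (exists r, S (Fin r))); [discriminate|].
    injection He as <-; lra.
Qed.

Lemma einf_fin (S : ER -> Prop) lb :
  (exists r, S (Fin r)) -> (forall r, S (Fin r) -> lb <= r) ->
  exists m, einf S = Fin m /\ lb <= m /\ (forall r, S (Fin r) -> m <= r) /\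
    (forall rho, m < rho -> exists r, S (Fin r) /\ r < rho).
Proof.
  intros [r0 H0] Hlb. unfold einf.
  destruct (excluded_middle_informative (exists r, S (Fin r))) as [_|h];
    [|exfalso; apply h; exists r0; exact H0].
  set (T := fun r => S (Fin (- r))).
  assert (HT : exists m, is_lub T m).
  { assert (Hb : bound T). { exists (- lb). intros x Hx. apply Hlb in Hx. lra. }
    assert (Hn : exists x, T x). { exists (- r0). unfold T. rewrite Ropp_involutive. exact H0. }
    destruct (completeness _ Hb Hn) as [m Hm]; exists m; exact Hm. }
  pose proof (epsilon_spec (inhabits 0) _ HT) as Hm.
  set (m := epsilon (inhabits 0) (fun m => is_lub T m)) in *.
  exists (- m). split; [reflexivity|]. destruct Hm as [Hu Hl].
  split; [|split].
  - assert (m <= - lb). { apply Hl. intros x Hx. apply Hlb in Hx. lra. } lra.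
  - intros r Hr. assert (- r <= m). { apply Hu. unfold T. rewrite Ropp_involutive. exact Hr. } lra.
  - intros rho Hrho. apply NNPP. intro Hno.
    assert (m <= - rho). { apply Hl. intros x Hx. unfold T in Hx.
      destruct (Rle_dec x (- rho)) as [?|Hc]; [assumption|].
      exfalso; apply Hno. exists (- x). split; [exact Hx| lra]. }
    lra.
Qed.

Lemma einfR_fin (S : R -> Prop) lb :
  (exists r, S r) -> (forall r, S r -> lb <= r) ->
  exists m, einfR S = Fin m /\ lb <= m /\ (forall r, S r -> m <= r) /\
    (forall rho, m < rho -> exists r, S r /\ r < rho).
Proof.
  intros [r0 H0] Hlb. unfold einfR.
  destruct (einf_fin (fun e => exists r, S r /\ e = Fin r) lb) as [m [E [A [B C]]]].
  - exists r0, r0; auto.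
  - intros r [r' [Hr' Heq]]. injection Heq as ->. auto.
  - exists m; split; [exact E|split; [exact A|split]].
    + intros r Hr. apply B. exists r; auto.
    + intros rho Hrho. destruct (C rho Hrho) as [r [[r' [Hr' Heq]] Hlt]].
      injection Heq as ->. exists r'; auto.
Qed.

Lemma rpow_ge0 x a : 0 <= rpow x a.
Proof. unfold rpow; destruct (Rlt_dec 0 x); [left; apply exp_pos|lra]. Qed.
Lemma rpow_gt0 x a : 0 < x -> 0 < rpow x a.
Proof. intro; unfold rpow; destruct (Rlt_dec 0 x); [apply exp_pos|lra]. Qed.
Lemma rpow_pos x a : 0 < x -> rpow x a = Rpower x a.
Proof. intro; unfold rpow; destruct (Rlt_dec 0 x); [reflexivity|lra]. Qed.
Lemma rpow_nonpos x a : x <= 0 -> rpow x a = 0.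
Proof. intro; unfold rpow; destruct (Rlt_dec 0 x); [lra|reflexivity]. Qed.
Lemma rpow_le x y a : 0 <= a -> 0 <= x <= y -> rpow x a <= rpow y a.
Proof.
  intros Ha [Hx Hxy]. destruct (Req_dec x 0) as [->|Hx0].
  - rewrite rpow_nonpos by lra. apply rpow_ge0.
  - rewrite !rpow_pos by lra. apply Rle_Rpower_l; lra.
Qed.
Lemma rpow_lt x y a : 0 < a -> 0 <= x < y -> rpow x a < rpow y a.
Proof.
  intros Ha [Hx Hxy]. destruct (Req_dec x 0) as [->|Hx0].
  - rewrite rpow_nonpos by lra. apply rpow_gt0; lra.
  - rewrite !rpow_pos by lra. unfold Rpower. apply exp_increasing.
    apply Rmult_lt_compat_l; [lra|]. apply ln_increasing; lra.
Qed.
Lemma rpow_mul x y a : 0 <= x -> 0 <= y -> rpow (x * y) a = rpow x a * rpow y a.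
Proof.
  intros Hx Hy. destruct (Req_dec x 0) as [->|Hx0].
  { rewrite Rmult_0_l, (rpow_nonpos 0 a) by lra. ring. }
  destruct (Req_dec y 0) as [->|Hy0].
  { rewrite Rmult_0_r, (rpow_nonpos 0 a) by lra. ring. }
  rewrite !rpow_pos by (try apply Rmult_lt_0_compat; lra).
  rewrite Rpower_mult_distr; lra.
Qed.
Lemma rpow_rpow x a b : 0 <= x -> rpow (rpow x a) b = rpow x (a * b).
Proof.
  intros Hx. destruct (Req_dec x 0) as [->|Hx0].
  { rewrite (rpow_nonpos 0 a) by lra. rewrite (rpow_nonpos 0 b) by lra. symmetry; apply rpow_nonpos; lra. }
  rewrite (rpow_pos x a) by lra. rewrite rpow_pos by (apply exp_pos).
  rewrite rpow_pos by lra. apply Rpower_mult.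
Qed.
Lemma rpow_1 x : 0 <= x -> rpow x 1 = x.
Proof.
  intros Hx. destruct (Req_dec x 0) as [->|Hx0]. { apply rpow_nonpos; lra. }
  rewrite rpow_pos by lra. apply Rpower_1; lra.
Qed.
Lemma rpow_inv x a : 0 <= x -> a <> 0 -> rpow (rpow x a) (/ a) = x.
Proof. intros. rewrite rpow_rpow by lra. rewrite Rinv_r by lra. apply rpow_1; lra. Qed.
Lemma rpow_inv' x a : 0 <= x -> a <> 0 -> rpow (rpow x (/ a)) a = x.
Proof. intros. rewrite rpow_rpow by lra. rewrite Rinv_l by lra. apply rpow_1; lra. Qed.
Lemma rpow_pow_nat x n : 0 < x -> rpow x (INR n) = x ^ n.
Proof. intros. rewrite rpow_pos by lra. apply Rpower_pow; lra. Qed.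
Lemma rpow_2_ge p : 1 <= p -> 2 <= rpow 2 p.
Proof.
  intros. rewrite rpow_pos by lra. rewrite <- (Rpower_1 2) at 1 by lra.
  apply Rle_Rpower; lra.
Qed.
Lemma rpow_le_base1 x a b : 1 <= x -> a <= b -> rpow x a <= rpow x b.
Proof. intros. rewrite !rpow_pos by lra. apply Rle_Rpower; lra. Qed.
Lemma rpow_2_inv_le p : 1 <= p -> rpow 2 (/ p) <= 2.
Proof.
  intros. rewrite rpow_pos by lra. rewrite <- (Rpower_1 2) at 2 by lra.
  apply Rle_Rpower; [lra|]. rewrite <- Rinv_1. apply Rinv_le_contravar; lra.
Qed.

Lemma rpow_sum_le u w a : 0 <= a -> 0 <= u -> 0 <= w ->
  rpow (u + w) a <= rpow 2 a * (rpow u a + rpow w a).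
Proof.
  intros Ha Hu Hw.
  assert (H : rpow (u + w) a <= rpow 2 a * rpow (Rmax u w) a).
  { rewrite <- rpow_mul by (try apply Rmax_Rle; lra).
    apply rpow_le; [lra|]. split; [lra|].
    pose proof (Rmax_l u w); pose proof (Rmax_r u w). lra. }
  eapply Rle_trans; [exact H|]. apply Rmult_le_compat_l; [apply rpow_ge0|].
  unfold Rmax; destruct (Rle_dec u w); pose proof (rpow_ge0 u a); pose proof (rpow_ge0 w a); lra.
Qed.

Lemma rpow_abs_sub u w a : 0 <= a ->
  rpow (Rabs (u - w)) a <= rpow 2 a * (rpow (Rabs u) a + rpow (Rabs w) a).
Proof.
  intros Ha. eapply Rle_trans; [|apply rpow_sum_le; try apply Rabs_pos; lra].
  apply rpow_le; [lra|]. split; [apply Rabs_pos|].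
  unfold Rminus. eapply Rle_trans; [apply Rabs_triang|]. rewrite Rabs_Ropp; lra.
Qed.

Lemma sumR_eq f l : infinite_sum f l -> sumR f = l.
Proof.
  intros H. unfold sumR. apply (uniqueness_sum f).
  - apply (epsilon_spec (inhabits 0) (fun l => infinite_sum f l)). exists l; exact H.
  - exact H.
Qed.

Lemma psum_le_lim f n l : (forall i, 0 <= f i) -> infinite_sum f l -> sum_f_R0 f n <= l.
Proof. intros H1 H2. apply sum_incr; assumption. Qed.


Lemma sum_nonneg f n : (forall k, 0 <= f k) -> 0 <= sum_f_R0 f n.
Proof. intros Hf; induction n; simpl; [apply Hf|pose proof (Hf (S n)); lra]. Qed.

Lemma sum_ge_term f i n : (forall k, 0 <= f k) -> (i <= n)%nat -> f i <= sum_f_R0 f n.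
Proof.
  intros Hf Hin. induction n.
  - replace i with 0%nat by lia. simpl; lra.
  - destruct (Nat.eq_dec i (S n)) as [->|Hne].
    + simpl. pose proof (sum_nonneg f n Hf). lra.
    + simpl. pose proof (Hf (S n)). assert (f i <= sum_f_R0 f n) by (apply IHn; lia). lra.
Qed.

Lemma series_term_le f l i : (forall k, 0 <= f k) -> infinite_sum f l -> f i <= l.
Proof.
  intros Hf Hl. eapply Rle_trans; [apply (sum_ge_term f i i Hf); lia|].
  apply sum_incr; assumption.
Qed.

Lemma series_bounded f M : (forall i, 0 <= f i) -> (forall n, sum_f_R0 f n <= M) ->
  exists l, infinite_sum f l /\ l <= M /\ 0 <= l.
Proof.
  intros Hf HM.
  assert (Hg : Un_growing (sum_f_R0 f)).
  { intro n. simpl. pose proof (Hf (S n)). lra. }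
  assert (Hu : has_ub (sum_f_R0 f)).
  { exists M. intros x [n ->]. apply HM. }
  destruct (growing_cv _ Hg Hu) as [l Hl].
  exists l. split; [exact Hl|split].
  - apply Rle_cv_lim with (Un := sum_f_R0 f) (Vn := fun _ => M); auto.
    intros e He; exists 0%nat; intros; unfold Rdist, R_dist; rewrite Rminus_diag, Rabs_R0; lra.
  - eapply Rle_trans; [apply (sum_nonneg f 0 Hf)|]. apply sum_incr; assumption.
Qed.

Lemma series_single f j : (forall n, n <> j -> f n = 0) -> infinite_sum f (f j).
Proof.
  intros Hf eps Heps. exists j. intros n Hn.
  assert (sum_f_R0 f n = f j).
  { induction n.
    - replace j with 0%nat by lia. reflexivity.
    - destruct (Nat.eq_dec j (S n)) as [->|Hne].
      + simpl. rewrite sum_eq_R0; [ring|]. intros k Hk. apply Hf. lia.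
      + simpl. rewrite IHn by lia. rewrite (Hf (S n)) by lia. ring. }
  rewrite H. unfold Rdist, R_dist. rewrite Rminus_diag, Rabs_R0; lra.
Qed.

Definition pw (p : R) (x : seqR) : nat -> R := fun i => rpow (Rabs (x i)) p.
Definition psum (p : R) (x : seqR) : R := sumR (pw p x).

Lemma pw_ge0 p x i : 0 <= pw p x i.
Proof. apply rpow_ge0. Qed.

Lemma lp_bounded p x M : (forall n, sum_f_R0 (pw p x) n <= M) ->
  in_lp p x /\ psum p x <= M /\ 0 <= psum p x.
Proof.
  intros H. destruct (series_bounded (pw p x) M (pw_ge0 p x) H) as [l [Hl [HM H0]]].
  unfold psum. rewrite (sumR_eq _ _ Hl). split; [exists l; exact Hl|auto].
Qed.

Lemma in_lp_sum p x : in_lp p x -> infinite_sum (pw p x) (psum p x).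
Proof. intros [l Hl]. change (infinite_sum (pw p x) l) in Hl. unfold psum. rewrite (sumR_eq _ _ Hl). exact Hl. Qed.

Lemma psum_partial p x n : in_lp p x -> sum_f_R0 (pw p x) n <= psum p x.
Proof. intros H. apply sum_incr; [apply in_lp_sum; auto|apply pw_ge0]. Qed.

Lemma psum_ge0 p x : in_lp p x -> 0 <= psum p x.
Proof. intros H. eapply Rle_trans; [apply (sum_nonneg _ 0 (pw_ge0 p x))|apply psum_partial; auto]. Qed.

Lemma psum_term p x i : in_lp p x -> pw p x i <= psum p x.
Proof. intros H. apply series_term_le; [apply pw_ge0|apply in_lp_sum; auto]. Qed.

Lemma lpnorm_ge0 p x : 0 <= lpnorm p x.
Proof. apply rpow_ge0. Qed.

Lemma lpnorm_le p x B : 0 < p -> in_lp p x -> 0 <= B -> psum p x <= rpow B p -> lpnorm p x <= B.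
Proof.
  intros Hp Hx HB H. unfold lpnorm. fold (pw p x). fold (psum p x).
  rewrite <- (rpow_inv B p) by lra.
  apply rpow_le; [left; apply Rinv_0_lt_compat; lra|]. split; [apply psum_ge0; auto|auto].
Qed.

Lemma lpnorm_le_inv p x B : 0 < p -> in_lp p x -> lpnorm p x <= B -> psum p x <= rpow B p.
Proof.
  intros Hp Hx H. unfold lpnorm in H. fold (pw p x) in H. fold (psum p x) in H.
  rewrite <- (rpow_inv' (psum p x) p) by (first [apply psum_ge0; auto | lra]).
  apply rpow_le; [lra|]. split; [apply rpow_ge0|auto].
Qed.

Lemma coord_le p x i : 0 < p -> in_lp p x -> Rabs (x i) <= lpnorm p x.
Proof.
  intros Hp Hx. unfold lpnorm. fold (pw p x). fold (psum p x).
  rewrite <- (rpow_inv (Rabs (x i)) p) by (try apply Rabs_pos; lra).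
  apply rpow_le; [left; apply Rinv_0_lt_compat; lra|]. split; [apply rpow_ge0|].
  apply (psum_term p x i Hx).
Qed.

Lemma sum_lin f g c n : sum_f_R0 (fun i => c * (f i + g i)) n = c * (sum_f_R0 f n + sum_f_R0 g n).
Proof. induction n; simpl; [ring|rewrite IHn; ring]. Qed.

Lemma in_lp_comb p x y (z : seqR) : 0 <= p -> in_lp p x -> in_lp p y ->
  (forall i, Rabs (z i) <= Rabs (x i) + Rabs (y i)) ->
  in_lp p z /\ psum p z <= rpow 2 p * (psum p x + psum p y).
Proof.
  intros Hp Hx Hy Hz.
  destruct (lp_bounded p z (rpow 2 p * (psum p x + psum p y))) as [A [B _]]; [|auto].
  intros n. eapply Rle_trans.
  - apply (sum_Rle _ (fun i => rpow 2 p * (pw p x i + pw p y i))). intros i _.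
    unfold pw. eapply Rle_trans; [|apply rpow_sum_le; try apply Rabs_pos; lra].
    apply rpow_le; [lra|split; [apply Rabs_pos|apply Hz]].
  - rewrite sum_lin. apply Rmult_le_compat_l; [apply rpow_ge0|].
    pose proof (psum_partial p x n Hx); pose proof (psum_partial p y n Hy); lra.
Qed.

Lemma in_lp_sub p x y : 0 <= p -> in_lp p x -> in_lp p y ->
  in_lp p (vsub x y) /\ psum p (vsub x y) <= rpow 2 p * (psum p x + psum p y).
Proof.
  intros. apply in_lp_comb; auto. intros i. unfold vsub. unfold Rminus.
  eapply Rle_trans; [apply Rabs_triang|]. rewrite Rabs_Ropp; lra.
Qed.

Lemma in_lp_add p x y : 0 <= p -> in_lp p x -> in_lp p y -> in_lp p (vadd x y).
Proof. intros. apply (in_lp_comb p x y); auto. intros i. apply Rabs_triang. Qed.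

Lemma in_lp_scale p t x : 0 <= p -> in_lp p x -> in_lp p (vscale t x).
Proof.
  intros Hp Hx.
  assert (E : forall n, sum_f_R0 (pw p (vscale t x)) n = rpow (Rabs t) p * sum_f_R0 (pw p x) n).
  { intro n. induction n; simpl; [|rewrite IHn]; unfold pw, vscale;
      rewrite Rabs_mult, rpow_mul by apply Rabs_pos; ring. }
  apply (lp_bounded p (vscale t x) (rpow (Rabs t) p * psum p x)).
  intros n. rewrite E. apply Rmult_le_compat_l; [apply rpow_ge0|apply psum_partial; auto].
Qed.

Lemma psum_zero p x : 0 < p -> (forall i, x i = 0) -> in_lp p x /\ psum p x = 0.
Proof.
  intros Hp H. destruct (lp_bounded p x 0) as [A [B C]].
  - intros n. rewrite sum_eq_R0; [lra|]. intros k _. unfold pw. rewrite H, Rabs_R0.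
    apply rpow_nonpos; lra.
  - split; auto; lra.
Qed.

Lemma lpnorm_zero p x : 0 < p -> (forall i, x i = 0) -> lpnorm p x = 0.
Proof.
  intros Hp H. destruct (psum_zero p x Hp H) as [_ E]. unfold lpnorm. fold (pw p x). fold (psum p x).
  rewrite E. apply rpow_nonpos; lra.
Qed.

Lemma lpnorm_single p x j : 0 < p -> (forall i, i <> j -> x i = 0) ->
  in_lp p x /\ lpnorm p x = Rabs (x j).
Proof.
  intros Hp H. assert (Hs : infinite_sum (pw p x) (pw p x j)).
  { apply series_single. intros n Hn. unfold pw. rewrite H, Rabs_R0 by auto. apply rpow_nonpos; lra. }
  split; [exists (pw p x j); exact Hs|]. unfold lpnorm. fold (pw p x). rewrite (sumR_eq _ _ Hs).
  unfold pw. apply rpow_inv; [apply Rabs_pos|lra].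
Qed.

Lemma ldist_ge0 p x y : 0 <= ldist p x y.
Proof. apply lpnorm_ge0. Qed.

Lemma ldist_sym p x y : ldist p x y = ldist p y x.
Proof.
  unfold ldist, lpnorm. f_equal. f_equal. apply functional_extensionality. intro i.
  unfold vsub. rewrite Rabs_minus_sym. reflexivity.
Qed.

Lemma ldist_coord p x y i : 0 < p -> in_lp p x -> in_lp p y -> Rabs (x i - y i) <= ldist p x y.
Proof.
  intros Hp Hx Hy. unfold ldist. apply (coord_le p (vsub x y) i Hp). apply in_lp_sub; auto; lra.
Qed.

Lemma ldist_self p x : 0 < p -> ldist p x x = 0.
Proof. intros. apply lpnorm_zero; auto. intros i; unfold vsub; ring. Qed.

Lemma psum_tri p x y z : 0 < p -> in_lp p x -> in_lp p y -> in_lp p z ->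
  psum p (vsub x z) <= rpow 2 p * (psum p (vsub x y) + psum p (vsub z y)).
Proof.
  intros Hp Hx Hy Hz.
  destruct (in_lp_sub p x y) as [H1 _]; try lra; auto.
  destruct (in_lp_sub p z y) as [H2 _]; try lra; auto.
  destruct (in_lp_comb p (vsub x y) (vsub z y) (vsub x z)) as [_ H]; auto; try lra.
  intros i. unfold vsub. replace (x i - z i) with ((x i - y i) - (z i - y i)) by ring.
  unfold Rminus at 1. eapply Rle_trans; [apply Rabs_triang|]. rewrite Rabs_Ropp. lra.
Qed.

Lemma ldist_le p x y B : 0 < p -> in_lp p x -> in_lp p y -> 0 <= B ->
  psum p (vsub x y) <= rpow B p -> ldist p x y <= B.
Proof. intros. apply lpnorm_le; auto. apply in_lp_sub; auto; lra. Qed.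

Lemma ldist_le_inv p x y B : 0 < p -> in_lp p x -> in_lp p y ->
  ldist p x y <= B -> psum p (vsub x y) <= rpow B p.
Proof. intros. apply lpnorm_le_inv; auto. apply in_lp_sub; auto; lra. Qed.

Lemma ldist_tri4 p x y z R : 1 <= p -> in_lp p x -> in_lp p y -> in_lp p z ->
  ldist p x y <= R -> ldist p z y <= R -> ldist p x z <= 4 * R.
Proof.
  intros Hp Hx Hy Hz H1 H2.
  assert (HR : 0 <= R) by (pose proof (ldist_ge0 p x y); lra).
  apply ldist_le; auto; try lra.
  eapply Rle_trans; [apply (psum_tri p x y z); auto; lra|].
  pose proof (ldist_le_inv p x y R ltac:(lra) Hx Hy H1).
  pose proof (ldist_le_inv p z y R ltac:(lra) Hz Hy H2).
  rewrite rpow_mul by lra.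
  assert (E : 4 = 2 * 2) by ring. rewrite E, rpow_mul by lra.
  pose proof (rpow_2_ge p Hp). pose proof (rpow_ge0 R p). pose proof (rpow_ge0 2 p).
  assert (rpow 2 p * (psum p (vsub x y) + psum p (vsub z y)) <= rpow 2 p * (2 * rpow R p)).
  { apply Rmult_le_compat_l; lra. }
  assert (rpow 2 p * (2 * rpow R p) <= rpow 2 p * (rpow 2 p * rpow R p)).
  { apply Rmult_le_compat_l; [lra|]. apply Rmult_le_compat_r; lra. }
  lra.
Qed.

Definition cb (i : nat) : R :=
  / (2 ^ (Nat.log2 i) * (INR (Nat.log2 i) + 1) * (INR (Nat.log2 i) + 2)).
Definition bseq (i : nat) : R := if (i =? 0)%nat then 0 else cb i / 2.
Definition Tt (i : nat) : R :=
  / (INR (Nat.log2 i) + 1) - (INR i - 2 ^ (Nat.log2 i)) * cb i.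

Lemma cb_pos i : 0 < cb i.
Proof.
  unfold cb. apply Rinv_0_lt_compat. pose proof (pos_INR (Nat.log2 i)).
  apply Rmult_lt_0_compat; [apply Rmult_lt_0_compat; [apply pow_lt|]|]; lra.
Qed.

Lemma cb_le1 i : cb i <= 1.
Proof.
  unfold cb. pose proof (pos_INR (Nat.log2 i)).
  assert (1 <= 2 ^ Nat.log2 i) by (apply pow_R1_Rle; lra).
  rewrite <- Rinv_1. apply Rinv_le_contravar; [lra|].
  assert (1 * 1 <= 2 ^ Nat.log2 i * (INR (Nat.log2 i) + 1)) by (apply Rmult_le_compat; lra).
  assert (1 * 1 <= 2 ^ Nat.log2 i * (INR (Nat.log2 i) + 1) * (INR (Nat.log2 i) + 2))
    by (apply Rmult_le_compat; lra). lra.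
Qed.

Lemma bseq_bounds i : 0 <= bseq i <= 1/2.
Proof.
  unfold bseq. destruct (i =? 0)%nat; [lra|]. pose proof (cb_pos i); pose proof (cb_le1 i); lra.
Qed.

Lemma Tt_step i : (0 < i)%nat -> Tt i - Tt (S i) = cb i.
Proof.
  intros Hi. pose proof (Nat.log2_spec i Hi) as [H1 H2].
  set (L := Nat.log2 i) in *.
  pose proof (pos_INR L).
  assert (HL : 0 < 2 ^ L) by (apply pow_lt; lra).
  destruct (Nat.log2_succ_or i) as [E|E].
  - 
    assert (Ei : S i = (2 ^ S L)%nat).
    { pose proof (Nat.log2_spec (S i) ltac:(lia)) as [H3 H4]. rewrite E in H3. fold L in H3. lia. }
    unfold Tt, cb. rewrite E. fold L. rewrite Ei, pow_INR, S_INR. simpl INR.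
    assert (INR i = 2 * 2 ^ L - 1).
    { assert (INR (S i) = INR (2 ^ S L)) by (rewrite Ei; reflexivity).
      rewrite S_INR, pow_INR in H0. simpl in H0. replace (1+1) with 2 in H0 by ring. lra. }
    rewrite H0. simpl. replace (1+1) with 2 by ring. field. lra.
  - unfold Tt. rewrite E. fold L. unfold cb. rewrite E. fold L. rewrite S_INR. field.
    repeat split; lra.
Qed.

Lemma Tt_nonneg i : (0 < i)%nat -> 0 <= Tt i.
Proof.
  intros Hi. pose proof (Nat.log2_spec i Hi) as [H1 H2].
  unfold Tt, cb. set (L := Nat.log2 i) in *. pose proof (pos_INR L).
  assert (HL : 0 < 2 ^ L) by (apply pow_lt; lra).
  assert (INR i < 2 * 2 ^ L).
  { apply lt_INR in H2. rewrite pow_INR in H2. simpl in H2. replace (1+1) with 2 in H2 by ring. lra. }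
  assert (2 ^ L <= INR i). { apply le_INR in H1. rewrite pow_INR in H1. simpl in H1. replace (1+1) with 2 in H1 by ring. lra. }
  assert (0 <= (INR i - 2 ^ L) / (2 ^ L) <= 1).
  { split; [apply Rmult_le_pos; [lra| left; apply Rinv_0_lt_compat; lra]|]. apply Rmult_le_reg_r with (2 ^ L); [lra|].
    field_simplify; lra. }
  replace ((INR i - 2 ^ L) * / (2 ^ L * (INR L + 1) * (INR L + 2)))
    with ((INR i - 2 ^ L) / 2 ^ L * / ((INR L + 1) * (INR L + 2))) by (field; lra).
  assert (/ (INR L + 1) - / ((INR L + 1) * (INR L + 2)) >= 0).
  { replace (/ (INR L + 1) - / ((INR L + 1) * (INR L + 2))) with ((INR L + 1) / ((INR L + 1) * (INR L + 2))) by (field; lra).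
    apply Rle_ge, Rmult_le_pos; [lra| left; apply Rinv_0_lt_compat; nra]. }
  assert (0 < / ((INR L + 1) * (INR L + 2))) by (apply Rinv_0_lt_compat; nra).
  nra.
Qed.

Lemma bseq_partial n : sum_f_R0 bseq n = (1 - Tt (S n)) / 2.
Proof.
  induction n.
  - simpl. unfold bseq, Tt, cb. simpl. field.
  - simpl sum_f_R0. rewrite IHn.
    assert (E : bseq (S n) = cb (S n) / 2) by reflexivity. rewrite E.
    pose proof (Tt_step (S n) ltac:(lia)). lra.
Qed.

Lemma bseq_partial_le n : sum_f_R0 bseq n <= 1/2.
Proof. rewrite bseq_partial. pose proof (Tt_nonneg (S n) ltac:(lia)). lra. Qed.

Lemma PI_gt3 : 3 < PI.
Proof. pose proof PI2_3_2. lra. Qed.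

Lemma abs_sin_le_pos w : 0 <= w -> Rabs (sin w) <= w.
Proof.
  intros Hw. destruct (Req_dec w 0) as [->|Hw0]. { rewrite sin_0, Rabs_R0; lra. }
  pose proof (sin_lt_x w ltac:(lra)). pose proof (SIN_bound w). pose proof PI_gt3.
  destruct (Rle_dec w 1).
  - assert (0 <= sin w) by (apply sin_ge_0; lra). rewrite Rabs_right; lra.
  - unfold Rabs; destruct (Rcase_abs (sin w)); lra.
Qed.

Lemma abs_sin_le z : Rabs (sin z) <= Rabs z.
Proof.
  destruct (Rle_dec 0 z).
  - rewrite (Rabs_right z) by lra. apply abs_sin_le_pos; lra.
  - pose proof (abs_sin_le_pos (-z) ltac:(lra)). rewrite sin_neg, Rabs_Ropp in H.
    rewrite (Rabs_left z) by lra. lra.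
Qed.

Lemma sin_lip x y : Rabs (sin x - sin y) <= Rabs (x - y).
Proof.
  rewrite form4. rewrite !Rabs_mult. rewrite (Rabs_right 2) by lra.
  pose proof (abs_sin_le ((x - y) / 2)). pose proof (COS_bound ((x + y) / 2)).
  assert (Rabs (cos ((x + y) / 2)) <= 1) by (apply Rabs_le; lra).
  assert (Rabs ((x - y) / 2) = Rabs (x - y) / 2).
  { unfold Rdiv. rewrite Rabs_mult, (Rabs_right (/ 2)) by lra. reflexivity. }
  pose proof (Rabs_pos (sin ((x - y) / 2))). pose proof (Rabs_pos (cos ((x + y) / 2))).
  nra.
Qed.

Definition fb (i : nat) (t : R) : R := Rabs (sin (PI * 2 ^ i * t)) / (PI * 2 ^ i).

Lemma fb_den_pos i : 0 < PI * 2 ^ i.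
Proof. apply Rmult_lt_0_compat; [apply PI_RGT_0|apply pow_lt; lra]. Qed.

Lemma fb_lip i s t : Rabs (fb i s - fb i t) <= Rabs (s - t).
Proof.
  unfold fb. pose proof (fb_den_pos i).
  replace (Rabs (sin (PI * 2 ^ i * s)) / (PI * 2 ^ i) - Rabs (sin (PI * 2 ^ i * t)) / (PI * 2 ^ i))
    with ((Rabs (sin (PI * 2 ^ i * s)) - Rabs (sin (PI * 2 ^ i * t))) / (PI * 2 ^ i)) by (unfold Rdiv; ring).
  unfold Rdiv. rewrite Rabs_mult, (Rabs_right (/ _)) by (left; apply Rinv_0_lt_compat; lra).
  apply Rmult_le_reg_r with (PI * 2 ^ i); [lra|].
  rewrite Rmult_assoc, Rinv_l by lra. rewrite Rmult_1_r.
  eapply Rle_trans; [apply Rabs_triang_inv2|]. eapply Rle_trans; [apply sin_lip|].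
  replace (PI * 2 ^ i * s - PI * 2 ^ i * t) with ((PI * 2 ^ i) * (s - t)) by ring.
  rewrite Rabs_mult, (Rabs_right (PI * 2 ^ i)) by lra. lra.
Qed.

Lemma fb_bounds i t : 0 <= fb i t <= 1.
Proof.
  unfold fb. pose proof (fb_den_pos i). pose proof (SIN_bound (PI * 2 ^ i * t)).
  assert (Rabs (sin (PI * 2 ^ i * t)) <= 1) by (apply Rabs_le; lra).
  assert (1 <= 2 ^ i) by (apply pow_R1_Rle; lra). pose proof PI_gt3.
  assert (PI * 1 <= PI * 2 ^ i) by (apply Rmult_le_compat_l; lra).
  split.
  - apply Rmult_le_pos; [apply Rabs_pos|left; apply Rinv_0_lt_compat; lra].
  - apply Rmult_le_reg_r with (PI * 2 ^ i); [lra|]. unfold Rdiv.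
    rewrite Rmult_assoc, Rinv_l by lra. lra.
Qed.

Definition aseq (p : R) (i : nat) : R := rpow (bseq i) (/ p).
Definition gc (p : R) (t : R) : seqR :=
  fun i => if (i =? 0)%nat then t else aseq p i * fb i t.
Definition cL (i : nat) : R := if (i =? 0)%nat then 1 else bseq i.

Lemma aseq_pow p i : 0 < p -> rpow (aseq p i) p = bseq i.
Proof. intros. unfold aseq. apply rpow_inv'; [apply bseq_bounds|lra]. Qed.

Lemma aseq_bounds p i : 1 <= p -> 0 <= aseq p i <= 1.
Proof.
  intros Hp. split; [apply rpow_ge0|]. unfold aseq.
  pose proof (bseq_bounds i).
  apply Rle_trans with (rpow 1 (/ p)).
  - apply rpow_le; [left; apply Rinv_0_lt_compat; lra|lra].
  - rewrite !rpow_pos by lra. unfold Rpower. rewrite ln_1, !Rmult_0_r, exp_0. lra.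
Qed.

Lemma cL_partial n : sum_f_R0 cL n <= 3/2.
Proof.
  assert (E : sum_f_R0 cL n = 1 + sum_f_R0 bseq n).
  { induction n; simpl. - unfold cL, bseq; simpl; ring. - rewrite IHn. unfold cL; simpl. ring. }
  rewrite E. pose proof (bseq_partial_le n). lra.
Qed.

Lemma cL_ge0 i : 0 <= cL i.
Proof. unfold cL. destruct (i =? 0)%nat; [lra|apply bseq_bounds]. Qed.

Lemma gc_pw_diff p s t i : 1 <= p ->
  pw p (vsub (gc p s) (gc p t)) i <= cL i * rpow (Rabs (s - t)) p.
Proof.
  intros Hp. unfold pw, vsub, gc, cL. destruct (i =? 0)%nat; [lra|].
  rewrite <- Rmult_minus_distr_l. pose proof (aseq_bounds p i Hp).
  rewrite Rabs_mult, (Rabs_right (aseq p i)) by lra.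
  rewrite <- (aseq_pow p i) by lra. rewrite <- rpow_mul by (try apply Rabs_pos; lra).
  apply rpow_le; [lra|]. split; [apply Rmult_le_pos; [lra|apply Rabs_pos]|].
  apply Rmult_le_compat_l; [lra|apply fb_lip].
Qed.

Lemma gc_pw p t i : 1 <= p -> Rabs t <= 1 -> pw p (gc p t) i <= cL i.
Proof.
  intros Hp Ht. unfold pw, gc, cL. destruct (i =? 0)%nat.
  - rewrite <- (rpow_1 1) by lra. apply Rle_trans with (rpow 1 p).
    + apply rpow_le; [lra|split; [apply Rabs_pos|lra]].
    + rewrite !rpow_pos by lra. unfold Rpower. rewrite ln_1, !Rmult_0_r, exp_0. lra.
  - pose proof (aseq_bounds p i Hp). pose proof (fb_bounds i t).
    rewrite <- (aseq_pow p i) by lra. apply rpow_le; [lra|].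
    rewrite Rabs_mult, !Rabs_right by lra. split; [apply Rmult_le_pos; lra|].
    rewrite <- (Rmult_1_r (aseq p i)) at 2. apply Rmult_le_compat_l; lra.
Qed.

Lemma gc_in_lp p t : 1 <= p -> 0 <= t <= 1 -> in_lp p (gc p t).
Proof.
  intros Hp Ht. apply (lp_bounded p (gc p t) (3/2)). intros n.
  eapply Rle_trans; [|apply (cL_partial n)]. apply sum_Rle. intros i _. apply gc_pw; auto.
  apply Rabs_le; lra.
Qed.

Lemma gc_lip p s t : 1 <= p -> 0 <= s <= 1 -> 0 <= t <= 1 ->
  ldist p (gc p s) (gc p t) <= 2 * Rabs (s - t).
Proof.
  intros Hp Hs Ht. apply ldist_le; try lra; try apply gc_in_lp; auto.
  - pose proof (Rabs_pos (s - t)); lra.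
  - destruct (lp_bounded p (vsub (gc p s) (gc p t)) (3/2 * rpow (Rabs (s - t)) p)) as [_ [H _]].
    + intros n. eapply Rle_trans.
      * apply (sum_Rle _ (fun i => cL i * rpow (Rabs (s - t)) p)). intros i _. apply gc_pw_diff; auto.
      * assert (E : forall m, sum_f_R0 (fun i => cL i * rpow (Rabs (s - t)) p) m
                   = sum_f_R0 cL m * rpow (Rabs (s - t)) p).
        { induction m; simpl; [ring|rewrite IHm; ring]. }
        rewrite E. apply Rmult_le_compat_r; [apply rpow_ge0|apply cL_partial].
    + eapply Rle_trans; [exact H|]. rewrite rpow_mul by (try apply Rabs_pos; lra).
      pose proof (rpow_2_ge p Hp). pose proof (rpow_ge0 (Rabs (s - t)) p). nra.
Qed.

Lemma gc_coord0 p t : gc p t 0%nat = t.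
Proof. reflexivity. Qed.

Lemma floor_nat x : 0 <= x -> exists n : nat, INR n <= x < INR n + 1.
Proof.
  intros Hx. destruct (archimed x) as [H1 H2].
  set (z := (up x - 1)%Z).
  assert (Hz : (0 <= z)%Z).
  { unfold z. assert (0 < IZR (up x)) by lra. apply lt_IZR in H. lia. }
  exists (Z.to_nat z). rewrite INR_IZR_INZ, Z2Nat.id by exact Hz.
  unfold z. rewrite minus_IZR. lra.
Qed.

Lemma gc_curve p : 1 <= p -> is_curve_param p (gc p).
Proof.
  intros Hp. split.
  - intros t Ht. apply gc_in_lp; auto.
  - intros t Ht eps Heps. exists (eps / 2). split; [lra|].
    intros s Hs Hst. eapply Rle_lt_trans; [apply gc_lip; auto|]. lra.
Qed.

Lemma esup_empty (S : ER -> Prop) : (forall e, ~ S e) -> esup S = Fin 0.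
Proof.
  intros H. unfold esup.
  destruct (excluded_middle_informative (S PInf)) as [h|h]; [exfalso; apply (H _ h)|].
  destruct (excluded_middle_informative
       ((exists r, S (Fin r)) /\ bound (fun r => S (Fin r)))) as [[[r h'] _]|h'];
    [exfalso; apply (H _ h')|].
  destruct (excluded_middle_informative (exists r, S (Fin r))) as [[r h'']|];
    [exfalso; apply (H _ h'')|reflexivity].
Qed.

Lemma diam_le p (U : seqR -> Prop) B : 0 < p -> 0 <= B ->
  (forall x y, U x -> U y -> ldist p x y <= B) ->
  exists d, diam p U = Fin d /\ 0 <= d <= B.
Proof.
  intros Hp HB H. unfold diam.
  destruct (classic (exists x, U x)) as [[x0 Hx0]|Hne].
  - destruct (esup_fin (fun e => exists x y, U x /\ U y /\ e = Fin (ldist p x y)))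
      as [m [Em Hm]].
    + intros [x [y [_ [_ E]]]]. discriminate.
    + exists (ldist p x0 x0), x0, x0. auto.
    + exists B. intros r [x [y [Hx [Hy E]]]]. injection E as ->. apply H; auto.
    + exists m. split; [exact Em|]. destruct Hm as [Hu Hl]. split.
      * eapply Rle_trans; [apply (ldist_ge0 p x0 x0)|]. apply Hu. exists x0, x0; auto.
      * apply Hl. intros r [x [y [Hx [Hy E]]]]. injection E as ->. apply H; auto.
  - exists 0. split; [|lra]. apply esup_empty. intros e [x [y [Hx _]]]. apply Hne; eauto.
Qed.

Definition lsum (l : list R) : R := fold_right Rplus 0 l.

Lemma fold_fin {I : Type} (f : I -> R) (l : list I) :
  fold_right er_add (Fin 0) (map (fun n => Fin (f n)) l) = Fin (lsum (map f l)).
Proof. induction l; simpl; [reflexivity|rewrite IHl; reflexivity]. Qed.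

Lemma lsum_app l1 l2 : lsum (l1 ++ l2) = lsum l1 + lsum l2.
Proof. induction l1; simpl; [ring|unfold lsum in *; simpl; rewrite IHl1; ring]. Qed.

Lemma lsum_split (d : nat -> R) N l : NoDup l ->
  lsum (map d l) = lsum (map (fun n => if (n =? N)%nat then 0 else d n) l)
                   + (if in_dec Nat.eq_dec N l then d N else 0).
Proof.
  induction l as [|a l IH]; intros Hnd.
  - simpl. destruct (in_dec Nat.eq_dec N nil) as [[]|]. unfold lsum; simpl; ring.
  - inversion Hnd; subst. cbn [map]. unfold lsum in *; cbn [fold_right]. rewrite IH by auto.
    destruct (in_dec Nat.eq_dec N l) as [Hi|Hi];
    destruct (in_dec Nat.eq_dec N (a :: l)) as [Hi'|Hi'].
    + destruct (Nat.eqb_spec a N) as [->|Hne]; [contradiction|ring].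
    + exfalso; apply Hi'; right; auto.
    + destruct Hi' as [->|Hi']; [|contradiction]. rewrite Nat.eqb_refl. ring.
    + destruct (Nat.eqb_spec a N) as [->|Hne]; [exfalso; apply Hi'; left; auto|ring].
Qed.

Lemma lsum_nonneg {I : Type} (d : I -> R) l : (forall n, 0 <= d n) -> 0 <= lsum (map d l).
Proof. intros H; induction l; simpl; [lra|unfold lsum in *; simpl; pose proof (H a); lra]. Qed.

Lemma nodup_sum_le (N : nat) : forall (d : nat -> R) l, NoDup l -> (forall n, 0 <= d n) ->
  (forall n, (N <= n)%nat -> d n = 0) ->
  lsum (map d l) <= lsum (map d (seq 0 N)).
Proof.
  induction N; intros d l Hnd H0 HN.
  - simpl. assert (lsum (map d l) = 0).
    { clear Hnd. induction l; simpl; [reflexivity|]. unfold lsum in *; simpl. rewrite IHl, HN by lia. ring. }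
    rewrite H. unfold lsum; simpl; lra.
  - rewrite (lsum_split d N l Hnd).
    set (d' := fun n => if (n =? N)%nat then 0 else d n).
    assert (IH : lsum (map d' l) <= lsum (map d' (seq 0 N))).
    { apply IHN; auto.
      - intros n; unfold d'; destruct (n =? N)%nat; [lra|apply H0].
      - intros n Hn; unfold d'. destruct (Nat.eqb_spec n N); [reflexivity|apply HN; lia]. }
    assert (E : map d' (seq 0 N) = map d (seq 0 N)).
    { apply map_ext_in. intros a Ha. apply in_seq in Ha. unfold d'.
      destruct (Nat.eqb_spec a N); [lia|reflexivity]. }
    rewrite E in IH. rewrite seq_S, map_app, lsum_app.
    assert (E2 : lsum (map d (0 + N :: nil)%nat) = d N) by (unfold lsum; simpl; ring).
    rewrite E2.
    destruct (in_dec Nat.eq_dec N l); pose proof (H0 N); lra.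
Qed.

Lemma lsum_const_le (d : nat -> R) N B : (forall n, d n <= B) -> lsum (map d (seq 0 N)) <= INR N * B.
Proof.
  intros H. induction N.
  - simpl. unfold lsum; simpl; lra.
  - rewrite seq_S, map_app, lsum_app, S_INR.
    assert (E2 : lsum (map d (0 + N :: nil)%nat) = d N) by (unfold lsum; simpl; ring).
    rewrite E2. pose proof (H N). lra.
Qed.

Lemma esum_ge0 {I : Type} (P : I -> Prop) f r : esum P f = Fin r -> 0 <= r.
Proof.
  intros H. unfold esum in H. eapply esup_ge0; [|exact H].
  exists nil. simpl. split; [constructor|split; [constructor|reflexivity]].
Qed.

Lemma H1delta_bound p delta : 1 <= p -> 0 < delta ->
  exists h, H1_delta p (image01 (gc p)) delta = Fin h /\ 0 <= h <= 2.
Proof.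
  intros Hp Hd.
  destruct (archimed_cor1 (delta / 2) ltac:(lra)) as [N [HN HN0]].
  assert (HNr : 0 < INR N) by (apply lt_0_INR; lia).
  set (U := fun (n : nat) (y : seqR) => (n < N)%nat /\
              exists t, INR n / INR N <= t <= INR (S n) / INR N /\ y = gc p t).
  assert (Ht01 : forall n t, (n < N)%nat -> INR n / INR N <= t <= INR (S n) / INR N -> 0 <= t <= 1).
  { intros n t Hn [H1 H2]. assert (INR (S n) <= INR N) by (apply le_INR; lia).
    pose proof (pos_INR n). split.
    - eapply Rle_trans; [|exact H1]. apply Rmult_le_pos; [lra|left; apply Rinv_0_lt_compat; lra].
    - eapply Rle_trans; [exact H2|]. apply Rmult_le_reg_r with (INR N); [lra|].
      unfold Rdiv. rewrite Rmult_assoc, Rinv_l by lra. lra. }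
  assert (HdU : forall n, exists d, diam p (U n) = Fin d /\ 0 <= d <= 2 / INR N /\
                     ((N <= n)%nat -> d = 0)).
  { intros n. destruct (lt_dec n N) as [Hn|Hn].
    - destruct (diam_le p (U n) (2 / INR N)) as [d [E Hd']]; try lra.
      + apply Rmult_le_pos; [lra|left; apply Rinv_0_lt_compat; lra].
      + intros x y [_ [t [Ht ->]]] [_ [s [Hs ->]]].
        pose proof (Ht01 n t Hn Ht); pose proof (Ht01 n s Hn Hs).
        eapply Rle_trans; [apply gc_lip; auto|].
        assert (INR (S n) / INR N - INR n / INR N = / INR N).
        { rewrite S_INR. field. lra. }
        assert (Rabs (t - s) <= / INR N) by (apply Rabs_le; lra).
        unfold Rdiv. lra.
      + exists d. split; [exact E|split; [exact Hd'|intros; lia]].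
    - destruct (diam_le p (U n) 0) as [d [E Hd']]; try lra.
      + intros x y [Hx _]. lia.
      + exists d. split; [exact E|]. split; [|intros; lra]. split; [lra|].
        assert (0 <= 2 / INR N) by (apply Rmult_le_pos; [lra|left; apply Rinv_0_lt_compat; lra]). lra. }
  set (d := fun n => er_real (diam p (U n))).
  assert (Ed : forall n, diam p (U n) = Fin (d n)).
  { intros n. unfold d. destruct (HdU n) as [x [E _]]. rewrite E. reflexivity. }
  assert (Hdb : forall n, 0 <= d n <= 2 / INR N /\ ((N <= n)%nat -> d n = 0)).
  { intros n. unfold d. destruct (HdU n) as [x [E H]]. rewrite E. exact H. }
  assert (HS : exists m, esum (fun _ : nat => True) (fun n => diam p (U n)) = Fin m /\ m <= 2).
  { unfold esum.
    assert (Eset : forall l, fold_right er_add (Fin 0) (map (fun n => diam p (U n)) l)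
                             = Fin (lsum (map d l))).
    { intros l. rewrite <- fold_fin. f_equal. apply map_ext. intros; apply Ed. }
    destruct (esup_fin (fun e => exists l : list nat, NoDup l /\ Forall (fun _ => True) l /\
         e = fold_right er_add (Fin 0) (map (fun n => diam p (U n)) l))) as [m [Em Hm]].
    - intros [l [_ [_ E]]]. rewrite Eset in E. discriminate.
    - exists 0, nil. split; [constructor|split; [constructor|reflexivity]].
    - exists 2. intros r [l [Hl [_ E]]]. rewrite Eset in E. injection E as ->.
      eapply Rle_trans; [apply (nodup_sum_le N); auto; intros n; [apply Hdb|apply Hdb]|].
      eapply Rle_trans; [apply (lsum_const_le d N (2 / INR N)); intros n; apply Hdb|].
      right. field. lra.
    - exists m. split; [exact Em|]. destruct Hm as [_ Hl]. apply Hl.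
      intros r [l [Hl' [_ E]]]. rewrite Eset in E. injection E as ->.
      eapply Rle_trans; [apply (nodup_sum_le N); auto; intros n; [apply Hdb|apply Hdb]|].
      eapply Rle_trans; [apply (lsum_const_le d N (2 / INR N)); intros n; apply Hdb|].
      right. field. lra. }
  destruct HS as [m [Em Hm]].
  unfold H1_delta.
  set (T := fun e => exists U : nat -> seqR -> Prop,
          (forall n y, U n y -> in_lp p y) /\
          (forall x, image01 (gc p) x -> exists n, U n x) /\
          (forall n, er_le (diam p (U n)) (Fin delta)) /\
          e = esum (fun _ : nat => True) (fun n => diam p (U n))).
  assert (HT : T (Fin m)).
  { exists U. split; [|split; [|split]].
    + intros n y [Hn [t [Ht ->]]]. apply gc_in_lp; auto. eapply Ht01; eauto.
    + intros x [t [Ht ->]].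
      destruct (floor_nat (t * INR N)) as [n [Hn1 Hn2]]; [nra|].
      destruct (lt_dec n N) as [HnN|HnN].
      * exists n. split; [exact HnN|]. exists t. split; [|reflexivity]. split.
        -- apply Rmult_le_reg_r with (INR N); [lra|]. unfold Rdiv. rewrite Rmult_assoc, Rinv_l by lra. lra.
        -- apply Rmult_le_reg_r with (INR N); [lra|]. unfold Rdiv. rewrite Rmult_assoc, Rinv_l by lra.
           rewrite S_INR. lra.
      * assert (INR N <= INR n) by (apply le_INR; lia).
        assert (t = 1) by nra. subst t.
        exists (N - 1)%nat. split; [lia|]. exists 1. split; [|reflexivity].
        replace (S (N - 1)) with N by lia. rewrite minus_INR by lia. simpl INR. split.
        -- apply Rmult_le_reg_r with (INR N); [lra|]. unfold Rdiv. rewrite Rmult_assoc, Rinv_l by lra. lra.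
        -- right. field. lra.
    + intros n. rewrite Ed. simpl. destruct (Hdb n) as [[_ H] _].
      assert (2 / INR N < delta).
      { unfold Rdiv. assert (/ INR N < delta / 2) by exact HN. lra. }
      lra.
    + symmetry; exact Em. }
  destruct (einf_fin T 0) as [h [Eh [H0 [Hle _]]]].
  - exists m; exact HT.
  - intros r [U' [_ [_ [_ E]]]]. symmetry in E. eapply esum_ge0; exact E.
  - exists h. split; [exact Eh|]. split; [exact H0|]. pose proof (Hle m HT). lra.
Qed.

Lemma H1_finite p : 1 <= p -> er_lt (H1 p (image01 (gc p))) PInf.
Proof.
  intros Hp. unfold H1.
  destruct (esup_fin (fun e => exists delta, 0 < delta /\ e = H1_delta p (image01 (gc p)) delta))
    as [m [Em _]].
  - intros [d [Hd E]]. destruct (H1delta_bound p d Hp Hd) as [h [Eh _]]. rewrite Eh in E. discriminate.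
  - destruct (H1delta_bound p 1 Hp ltac:(lra)) as [h [Eh _]]. exists h, 1. split; [lra|auto].
  - exists 2. intros r [d [Hd E]]. destruct (H1delta_bound p d Hp Hd) as [h [Eh Hh]].
    rewrite Eh in E. injection E as ->. lra.
  - rewrite Em. exact I.
Qed.

Lemma alg3 a0 v0 am vm s1 s2 s3 t1 l h d :
  0 < h -> h <= l -> d <= h / 4 ->
  Rabs (t1 - (a0 + s1 * v0)) < d -> Rabs (t1 + l - (a0 + s2 * v0)) < d ->
  Rabs (t1 + 2 * l - (a0 + s3 * v0)) < d ->
  Rabs (0 - (am + s1 * vm)) < d -> Rabs (h - (am + s2 * vm)) < d ->
  Rabs (0 - (am + s3 * vm)) < d -> False.
Proof.
  intros Hh Hl Hd H1 H2 H3 H4 H5 H6.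
  apply Rabs_def2 in H1; apply Rabs_def2 in H2; apply Rabs_def2 in H3;
  apply Rabs_def2 in H4; apply Rabs_def2 in H5; apply Rabs_def2 in H6.
  set (X := (s2 - (s1 + s3) / 2) * v0).
  set (Y := (s2 - (s1 + s3) / 2) * vm).
  set (U := (s3 - s1) * v0).
  set (W := (s3 - s1) * vm).
  assert (E : X * W = Y * U) by (unfold X, Y, U, W; ring).
  assert (HX : Rabs X < 2 * d).
  { apply Rabs_def1; unfold X; lra. }
  assert (HW : Rabs W < 2 * d).
  { apply Rabs_def1; unfold W; lra. }
  assert (HY : Y > h / 2) by (unfold Y; lra).
  assert (HU : U > 3 * h / 2) by (unfold U; lra).
  assert (Rabs (X * W) < h * h / 4).
  { rewrite Rabs_mult. assert (0 <= d) by (pose proof (Rabs_pos X); lra).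
    pose proof (Rabs_pos X); pose proof (Rabs_pos W).
    assert (Rabs X * Rabs W <= 2 * d * (2 * d)).
    { apply Rmult_le_compat; lra. }
    nra. }
  rewrite E in H. rewrite Rabs_right in H by nra. nra.
Qed.

Lemma fb_zero m J : fb m (INR J / 2 ^ m) = 0.
Proof.
  unfold fb. assert (0 < 2 ^ m) by (apply pow_lt; lra).
  replace (PI * 2 ^ m * (INR J / 2 ^ m)) with (IZR (Z.of_nat J) * PI)
    by (rewrite <- INR_IZR_INZ; field; lra).
  rewrite sin_eq_0_1 by (eexists; reflexivity). rewrite Rabs_R0. unfold Rdiv; ring.
Qed.

Lemma fb_half m J : fb m (INR J / 2 ^ m + / (2 * 2 ^ m)) = / (PI * 2 ^ m).
Proof.
  unfold fb. assert (0 < 2 ^ m) by (apply pow_lt; lra). pose proof PI_RGT_0.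
  replace (PI * 2 ^ m * (INR J / 2 ^ m + / (2 * 2 ^ m))) with (IZR (Z.of_nat J) * PI + PI / 2)
    by (rewrite <- INR_IZR_INZ; field; lra).
  set (z := IZR (Z.of_nat J) * PI + PI / 2).
  assert (Hc : cos z = 0) by (apply cos_eq_0_1; eexists; reflexivity).
  pose proof (sin2_cos2 z). rewrite Hc in H1. unfold Rsqr in H1.
  assert (Rabs (sin z) = 1).
  { pose proof (Rabs_pos (sin z)). assert (Rabs (sin z) * Rabs (sin z) = 1).
    { rewrite <- Rabs_mult. rewrite Rabs_right; lra. }
    nra. }
  rewrite H2. unfold Rdiv; ring.
Qed.

Lemma fb_one m J : fb m (INR J / 2 ^ m + 2 * / (2 * 2 ^ m)) = 0.
Proof.
  replace (INR J / 2 ^ m + 2 * / (2 * 2 ^ m)) with (INR (S J) / 2 ^ m).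
  - apply fb_zero.
  - assert (0 < 2 ^ m) by (apply pow_lt; lra). rewrite S_INR. field. lra.
Qed.

Lemma three_point p m J a v : 1 <= p -> (1 <= m)%nat -> (J + 1 <= 2 ^ m)%nat ->
  in_lp p a -> in_lp p v ->
  exists t, INR J / 2 ^ m <= t <= INR J / 2 ^ m + 2 * / (2 * 2 ^ m) /\
    forall s, aseq p m / (PI * 2 ^ m) / 4 <= ldist p (gc p t) (vadd a (vscale s v)).
Proof.
  intros Hp Hm HJ Ha Hv.
  assert (H2m : 0 < 2 ^ m) by (apply pow_lt; lra). pose proof PI_gt3.
  assert (HJr : INR J + 1 <= 2 ^ m).
  { apply le_INR in HJ. rewrite plus_INR, pow_INR in HJ. simpl in HJ.
    replace (1+1) with 2 in HJ by ring. exact HJ. }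
  pose proof (pos_INR J).
  set (t1 := INR J / 2 ^ m). set (l := / (2 * 2 ^ m)).
  assert (Hl : 0 < l) by (unfold l; apply Rinv_0_lt_compat; lra).
  assert (Ht1 : 0 <= t1) by (unfold t1; apply Rmult_le_pos; [lra|left; apply Rinv_0_lt_compat; lra]).
  assert (Ht3 : t1 + 2 * l <= 1).
  { unfold t1, l. apply Rmult_le_reg_r with (2 ^ m); [lra|].
    replace ((INR J / 2 ^ m + 2 * / (2 * 2 ^ m)) * 2 ^ m) with (INR J + 1) by (field; lra). lra. }
  set (h := aseq p m / (PI * 2 ^ m)).
  assert (Hbm : 0 < bseq m).
  { unfold bseq. destruct (Nat.eqb_spec m 0); [lia|]. pose proof (cb_pos m); lra. }
  assert (Ham : 0 < aseq p m) by (apply rpow_gt0; exact Hbm).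
  pose proof (aseq_bounds p m Hp).
  assert (Hh : 0 < h) by (unfold h; apply Rmult_lt_0_compat; [lra|apply Rinv_0_lt_compat; nra]).
  assert (Hhl : h <= l).
  { unfold h, l. apply Rle_trans with (/ (PI * 2 ^ m)).
    - unfold Rdiv. rewrite <- (Rmult_1_l (/ (PI * 2 ^ m))) at 2. apply Rmult_le_compat_r; [left; apply Rinv_0_lt_compat; nra|lra].
    - apply Rinv_le_contravar; nra. }
  assert (Hc0 : forall t, gc p t 0%nat = t) by reflexivity.
  assert (Hcm : forall t, gc p t m = aseq p m * fb m t).
  { intros t. unfold gc. destruct (Nat.eqb_spec m 0); [lia|reflexivity]. }
  apply NNPP. intros Hno.
  assert (Hex : forall t, 0 <= t <= 1 -> t1 <= t <= t1 + 2 * l ->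
            exists s, ldist p (gc p t) (vadd a (vscale s v)) < h / 4).
  { intros t Ht Htr. apply NNPP. intros Hn. apply Hno. exists t. split; [exact Htr|].
    intros s. apply Rnot_lt_le. intros Hlt. apply Hn. exists s. exact Hlt. }
  assert (Hlin : forall s, in_lp p (vadd a (vscale s v))).
  { intros s. apply in_lp_add; try lra; auto. apply in_lp_scale; auto; lra. }
  assert (Hco : forall t s i, 0 <= t <= 1 -> ldist p (gc p t) (vadd a (vscale s v)) < h / 4 ->
            Rabs (gc p t i - (a i + s * v i)) < h / 4).
  { intros t s i Ht Hd. eapply Rle_lt_trans; [|exact Hd].
    apply (ldist_coord p (gc p t) (vadd a (vscale s v)) i); try lra; auto. apply gc_in_lp; auto. }
  destruct (Hex t1 ltac:(lra) ltac:(lra)) as [s1 Hs1].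
  destruct (Hex (t1 + l) ltac:(lra) ltac:(lra)) as [s2 Hs2].
  destruct (Hex (t1 + 2 * l) ltac:(lra) ltac:(lra)) as [s3 Hs3].
  apply (alg3 (a 0%nat) (v 0%nat) (a m) (v m) s1 s2 s3 t1 l h (h / 4)); try lra.
  - pose proof (Hco t1 s1 0%nat ltac:(lra) Hs1) as Hq. rewrite Hc0 in Hq. exact Hq.
  - pose proof (Hco (t1 + l) s2 0%nat ltac:(lra) Hs2) as Hq. rewrite Hc0 in Hq. exact Hq.
  - pose proof (Hco (t1 + 2 * l) s3 0%nat ltac:(lra) Hs3) as Hq. rewrite Hc0 in Hq. exact Hq.
  - pose proof (Hco t1 s1 m ltac:(lra) Hs1) as Hq. rewrite Hcm in Hq. unfold t1 in Hq.
    rewrite fb_zero, Rmult_0_r in Hq. exact Hq.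
  - pose proof (Hco (t1 + l) s2 m ltac:(lra) Hs2) as Hq. rewrite Hcm in Hq. unfold t1, l in Hq.
    rewrite fb_half in Hq. exact Hq.
  - pose proof (Hco (t1 + 2 * l) s3 m ltac:(lra) Hs3) as Hq. rewrite Hcm in Hq. unfold t1, l in Hq.
    rewrite fb_one, Rmult_0_r in Hq. exact Hq.
Qed.

Lemma esup_ub (S : ER -> Prop) d r : esup S = Fin d -> S (Fin r) -> r <= d.
Proof.
  intros He Hr. unfold esup in He.
  destruct (excluded_middle_informative (S PInf)) as [h|h]; [discriminate|].
  destruct (excluded_middle_informative
       ((exists r, S (Fin r)) /\ bound (fun r => S (Fin r)))) as [h'|h'].
  - injection He as <-. destruct h' as [hn hb].
    assert (Hl: exists m, is_lub (fun r => S (Fin r)) m).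
    { destruct (completeness _ hb hn) as [m Hm]; exists m; exact Hm. }
    pose proof (epsilon_spec (inhabits 0) _ Hl) as [Hu _]. apply Hu; exact Hr.
  - destruct (excluded_middle_informative (exists r, S (Fin r))) as [_|hn]; [discriminate|].
    exfalso; apply hn; exists r; exact Hr.
Qed.

Definition e0 : seqR := fun i => if (i =? 0)%nat then 1 else 0.

Lemma e0_lp p : 0 < p -> in_lp p e0.
Proof.
  intros Hp. apply (lpnorm_single p e0 0%nat Hp). intros i Hi. unfold e0.
  destruct (Nat.eqb_spec i 0); [contradiction|reflexivity].
Qed.

Lemma vzero_lp p : 0 < p -> in_lp p vzero.
Proof. intros Hp. apply (psum_zero p vzero Hp). intros; reflexivity. Qed.

Lemma cball_diam p c R : 1 <= p -> 0 < R -> in_lp p c ->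
  exists D, diam p (cball p c R) = Fin D /\ R <= D <= 4 * R.
Proof.
  intros Hp HR Hc.
  destruct (diam_le p (cball p c R) (4 * R)) as [D [ED HD]]; try lra.
  { intros x y [Hx Hxc] [Hy Hyc]. apply (ldist_tri4 p x c y R); auto. }
  exists D. split; [exact ED|split; [|lra]].
  set (z := vadd c (vscale R e0)).
  assert (Hz : in_lp p z) by (apply in_lp_add; try lra; auto; apply in_lp_scale; try lra; apply e0_lp; lra).
  assert (Ezc : vsub z c = vscale R e0).
  { apply functional_extensionality; intros i. unfold z, vsub, vadd, vscale. ring. }
  assert (Hd : ldist p z c = R).
  { unfold ldist. rewrite Ezc. destruct (lpnorm_single p (vscale R e0) 0%nat ltac:(lra)) as [_ E].
    - intros i Hi. unfold vscale, e0. destruct (Nat.eqb_spec i 0); [contradiction|ring].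
    - rewrite E. unfold vscale, e0. simpl. rewrite Rmult_1_r. apply Rabs_right; lra. }
  unfold diam in ED. rewrite <- Hd. eapply esup_ub; [exact ED|].
  exists z, c. split; [split; [exact Hz|lra]|split; [split; [exact Hc|]|reflexivity]].
  rewrite ldist_self; lra.
Qed.

Lemma dist_set_fin p x (L : seqR -> Prop) y0 lb :
  L y0 -> 0 <= lb -> (forall y, L y -> lb <= ldist p x y) ->
  exists m, dist_set p x L = Fin m /\ lb <= m /\ m <= ldist p x y0.
Proof.
  intros Hy0 Hlb H. unfold dist_set.
  destruct (einfR_fin (fun r => exists y, L y /\ r = ldist p x y) lb) as [m [E [H1 [H2 _]]]].
  - exists (ldist p x y0), y0; auto.
  - intros r [y [Hy ->]]. auto.
  - exists m. split; [exact E|split; [exact H1|]]. apply H2. exists y0; auto.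
Qed.

Lemma beta_lower p (E : seqR -> Prop) c R s0 : 1 <= p -> 0 < R -> 0 <= s0 -> in_lp p c -> E c ->
  (forall x, E x -> in_lp p x) ->
  (forall a v, in_lp p a -> in_lp p v -> exists x, E x /\ cball p c R x /\
      forall s, s0 <= ldist p x (vadd a (vscale s v))) ->
  s0 / (4 * R) <= beta p E (cball p c R).
Proof.
  intros Hp HR Hs0 Hc HEc HE Hkey.
  destruct (cball_diam p c R Hp HR Hc) as [D [ED HD]].
  unfold beta.
  destruct (excluded_middle_informative (exists x, E x /\ cball p c R x)) as [_|Hn].
  2:{ exfalso; apply Hn. exists c. split; [exact HEc|split; [exact Hc|rewrite ldist_self; lra]]. }
  rewrite ED. simpl er_real.
  destruct (einfR_fin (fun b => exists L, is_line p L /\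
      b = er_real (esup (fun e => exists x, E x /\ cball p c R x /\
                                   e = Fin (er_real (dist_set p x L)))) / D) (s0 / (4 * R)))
    as [bt [Eb [Hb _]]].
  - set (L0 := fun y => exists t, y = vadd vzero (vscale t e0)).
    eexists. exists L0. split; [|reflexivity].
    exists vzero, e0. split; [apply vzero_lp; lra|split; [apply e0_lp; lra|split]].
    + intros Heq. assert (e0 0%nat = vzero 0%nat) by (rewrite Heq; reflexivity).
      unfold e0, vzero in H. simpl in H. lra.
    + intros y. unfold L0. tauto.
  - intros b [L [[a [v [Ha [Hv [Hv0 HL]]]]] ->]].
    destruct (Hkey a v Ha Hv) as [x0 [Hx0E [Hx0Q Hx0d]]].
    set (y0 := vadd a (vscale 0 v)).
    assert (Hy0L : L y0) by (apply HL; exists 0; reflexivity).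
    assert (Hy0 : in_lp p y0) by (apply in_lp_add; try lra; auto; apply in_lp_scale; auto; lra).
    assert (HLlp : forall y, L y -> in_lp p y).
    { intros y Hy. apply HL in Hy. destruct Hy as [t ->].
      apply in_lp_add; try lra; auto; apply in_lp_scale; auto; lra. }
    set (K := rpow 2 p * (rpow R p + psum p (vsub y0 c))).
    assert (HK : 0 <= K).
    { unfold K. apply Rmult_le_pos; [apply rpow_ge0|].
      pose proof (rpow_ge0 R p). pose proof (psum_ge0 p (vsub y0 c)
        ltac:(apply in_lp_sub; auto; lra)). lra. }
    set (B := rpow K (/ p)).
    assert (HB : forall x, E x -> cball p c R x -> ldist p x y0 <= B).
    { intros x Hx [Hxl Hxc]. apply ldist_le; auto; try lra; [apply rpow_ge0|].
      unfold B. rewrite rpow_inv' by lra.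
      eapply Rle_trans; [apply (psum_tri p x c y0); auto; lra|].
      unfold K. apply Rmult_le_compat_l; [apply rpow_ge0|].
      pose proof (ldist_le_inv p x c R ltac:(lra) Hxl Hc Hxc). lra. }
    destruct (esup_fin (fun e => exists x, E x /\ cball p c R x /\
                                   e = Fin (er_real (dist_set p x L)))) as [M [EM HM]].
    + intros [x [_ [_ Hx]]]. discriminate.
    + exists (er_real (dist_set p x0 L)), x0. auto.
    + exists B. intros r [x [Hx [HxQ Er]]]. injection Er as ->.
      destruct (dist_set_fin p x L y0 0 Hy0L ltac:(lra)) as [m [Em [_ Hm]]].
      { intros y _. apply ldist_ge0. }
      rewrite Em. simpl. specialize (HB x Hx HxQ). lra.
    + rewrite EM. simpl er_real.
      destruct (dist_set_fin p x0 L y0 s0 Hy0L Hs0) as [m [Em [Hm _]]].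
      { intros y Hy. apply HL in Hy. destruct Hy as [t ->]. apply Hx0d. }
      assert (s0 <= M).
      { eapply Rle_trans; [exact Hm|]. destruct HM as [Hu _]. apply Hu.
        exists x0. split; [auto|split; [auto|]]. rewrite Em. reflexivity. }
      assert (0 < D) by lra.
      unfold Rdiv. apply Rle_trans with (s0 * / D).
      * apply Rmult_le_compat_l; [lra|]. apply Rinv_le_contravar; lra.
      * apply Rmult_le_compat_r; [left; apply Rinv_0_lt_compat; lra|lra].
  - rewrite Eb. simpl. exact Hb.
Qed.

Lemma term_lower p (E : seqR -> Prop) c R s0 r : 1 <= p -> 0 < R -> 0 <= s0 -> 0 < r -> in_lp p c -> E c ->
  (forall x, E x -> in_lp p x) ->
  (forall a v, in_lp p a -> in_lp p v -> exists x, E x /\ cball p c R x /\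
      forall s, s0 <= ldist p x (vadd a (vscale s v))) ->
  rpow (s0 / (4 * R)) r * R <= rpow (beta p E (cball p c R)) r * er_real (diam p (cball p c R)).
Proof.
  intros Hp HR Hs0 Hr Hc HEc HE Hkey.
  pose proof (beta_lower p E c R s0 Hp HR Hs0 Hc HEc HE Hkey) as Hb.
  destruct (cball_diam p c R Hp HR Hc) as [D [ED HD]]. rewrite ED. simpl.
  apply Rmult_le_compat; [apply rpow_ge0|lra| |lra].
  apply rpow_le; [lra|]. split; [|exact Hb].
  apply Rmult_le_pos; [lra|left; apply Rinv_0_lt_compat; lra].
Qed.

Lemma image_lp p : 1 <= p -> forall x, image01 (gc p) x -> in_lp p x.
Proof. intros Hp x [t [Ht ->]]. apply gc_in_lp; auto. Qed.

Lemma level_term p A k tau r : 1 <= p -> 1 < A -> (1 <= k)%nat -> 0 <= tau <= 1 -> 0 < r ->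
  rpow (aseq p (k + 2) / (64 * PI * A)) r * (A / 2 ^ k) <=
  rpow (beta p (image01 (gc p)) (cball p (gc p tau) (A / 2 ^ k))) r *
    er_real (diam p (cball p (gc p tau) (A / 2 ^ k))).
Proof.
  intros Hp HA Hk Htau Hr.
  set (m := (k + 2)%nat).
  assert (H2k : 0 < 2 ^ k) by (apply pow_lt; lra).
  assert (E2m : 2 ^ m = 4 * 2 ^ k).
  { unfold m. rewrite pow_add. simpl. ring. }
  pose proof PI_gt3.
  pose proof (aseq_bounds p m Hp) as Ham.
  set (s0 := aseq p m / (PI * 2 ^ m) / 4).
  assert (Es : s0 / (4 * (A / 2 ^ k)) = aseq p m / (64 * PI * A)).
  { unfold s0. rewrite E2m. field. repeat split; lra. }
  rewrite <- Es.
  apply term_lower; auto.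
  - apply Rmult_lt_0_compat; [lra|apply Rinv_0_lt_compat; lra].
  - unfold s0. apply Rmult_le_pos; [|lra]. apply Rmult_le_pos; [lra|].
    left; apply Rinv_0_lt_compat. rewrite E2m. nra.
  - apply gc_in_lp; auto.
  - exists tau; auto.
  - apply image_lp; auto.
  - intros a v Ha Hv.
    assert (H2m : 0 < 2 ^ m) by lra.
    destruct (floor_nat (tau * 2 ^ m)) as [n [Hn1 Hn2]]; [nra|].
    set (J := (n - 1)%nat).
    assert (HJn : INR J <= INR n /\ INR n - 1 <= INR J).
    { unfold J. destruct n. - simpl. lra. - replace (S n - 1)%nat with n by lia. rewrite S_INR. lra. }
    assert (Hnm : INR n <= 2 ^ m) by nra.
    assert (HJ1 : (J + 1 <= 2 ^ m)%nat).
    { assert (Hnm' : (n <= 2 ^ m)%nat).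
      { apply INR_le. rewrite pow_INR. simpl. replace (1+1) with 2 by ring. exact Hnm. }
      assert (1 <= 2 ^ m)%nat by (apply Nat.pow_le_mono_r with (a := 2%nat) (b := 0%nat); lia).
      unfold J. lia. }
    destruct (three_point p m J a v Hp ltac:(unfold m; lia) HJ1 Ha Hv) as [t [Ht Hdist]].
    assert (Et : INR J / 2 ^ m + 2 * / (2 * 2 ^ m) = (INR J + 1) / 2 ^ m) by (field; lra).
    rewrite Et in Ht.
    assert (HJm : INR J + 1 <= 2 ^ m).
    { apply le_INR in HJ1. rewrite plus_INR, pow_INR in HJ1. simpl in HJ1.
      replace (1+1) with 2 in HJ1 by ring. exact HJ1. }
    pose proof (pos_INR J).
    assert (Ht01 : 0 <= t <= 1).
    { split.
      - eapply Rle_trans; [|apply Ht]. apply Rmult_le_pos; [lra|left; apply Rinv_0_lt_compat; lra].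
      - eapply Rle_trans; [apply Ht|]. apply Rmult_le_reg_r with (2 ^ m); [lra|].
        unfold Rdiv. rewrite Rmult_assoc, Rinv_l by lra. lra. }
    assert (Htt : Rabs (t - tau) <= 2 / 2 ^ m).
    { assert (INR J / 2 ^ m * 2 ^ m = INR J) by (field; lra).
      assert ((INR J + 1) / 2 ^ m * 2 ^ m = INR J + 1) by (field; lra).
      assert (INR n / 2 ^ m <= tau) by (apply Rmult_le_reg_r with (2 ^ m); [lra|];
        unfold Rdiv; rewrite Rmult_assoc, Rinv_l by lra; lra).
      assert (tau < (INR n + 1) / 2 ^ m) by (apply Rmult_lt_reg_r with (2 ^ m); [lra|];
        unfold Rdiv; rewrite Rmult_assoc, Rinv_l by lra; lra).
      assert (INR J / 2 ^ m >= (INR n - 1) / 2 ^ m).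
      { apply Rle_ge. apply Rmult_le_compat_r; [left; apply Rinv_0_lt_compat; lra|lra]. }
      assert ((INR J + 1) / 2 ^ m <= (INR n + 1) / 2 ^ m).
      { apply Rmult_le_compat_r; [left; apply Rinv_0_lt_compat; lra|lra]. }
      assert ((INR n + 1) / 2 ^ m - (INR n - 1) / 2 ^ m = 2 / 2 ^ m) by (field; lra).
      assert ((INR n + 1) / 2 ^ m - INR n / 2 ^ m = 1 / 2 ^ m) by (field; lra).
      assert (0 < 1 / 2 ^ m) by (apply Rmult_lt_0_compat; [lra|apply Rinv_0_lt_compat; lra]).
      apply Rabs_le. lra. }
    exists (gc p t). split; [exists t; auto|split].
    + split; [apply gc_in_lp; auto|].
      eapply Rle_trans; [apply gc_lip; auto|].
      rewrite E2m in Htt.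
      assert (2 * (2 / (4 * 2 ^ k)) = 1 / 2 ^ k) by (field; lra).
      assert (1 / 2 ^ k <= A / 2 ^ k) by (apply Rmult_le_compat_r; [left; apply Rinv_0_lt_compat; lra|lra]).
      lra.
    + intros s. apply Hdist.
Qed.

Definition bval (L : nat) : R := / (2 * 2 ^ L * (INR L + 1) * (INR L + 2)).

Lemma bernoulli d n : 0 <= d -> 1 + INR n * d <= (1 + d) ^ n.
Proof.
  intros Hd. induction n; [simpl; lra|].
  rewrite S_INR. simpl pow. assert (0 <= INR n * d) by (apply Rmult_le_pos; [apply pos_INR|lra]).
  assert ((1 + d) * (1 + INR n * d) <= (1 + d) * (1 + d) ^ n) by (apply Rmult_le_compat_l; lra).
  nra.
Qed.

Lemma rpow_inv_base x a : 0 < x -> rpow (/ x) a = / rpow x a.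
Proof.
  intros Hx. rewrite !rpow_pos by (try apply Rinv_0_lt_compat; lra).
  unfold Rpower. rewrite ln_Rinv by lra. rewrite <- exp_Ropp. f_equal. ring.
Qed.

Lemma block_big s M : 0 < s < 1 -> exists L, (2 <= L)%nat /\ M <= 2 ^ L * rpow (bval L) s.
Proof.
  intros Hs.
  set (w := 1 - s). set (q := rpow 2 w).
  assert (Hq : 1 < q).
  { unfold q. rewrite rpow_pos by lra. rewrite <- (Rpower_O 2) by lra. apply Rpower_lt; unfold w; lra. }
  set (d := q - 1).
  assert (Hd : 0 < d) by (unfold d; lra).
  assert (Hlow : forall L, (1 <= L)%nat -> q ^ L / (2 * (INR L + 2) ^ 2) <= 2 ^ L * rpow (bval L) s).
  { intros L HL. pose proof (pos_INR L).
    set (C := 2 * (INR L + 1) * (INR L + 2)).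
    assert (HC : 1 <= C) by (unfold C; nra).
    assert (H2L : 0 < 2 ^ L) by (apply pow_lt; lra).
    assert (Eb : bval L = / 2 ^ L * / C) by (unfold bval, C; field; repeat split; lra).
    rewrite Eb, rpow_mul by (left; apply Rinv_0_lt_compat; lra).
    rewrite !rpow_inv_base by lra.
    assert (E1 : rpow (2 ^ L) s = rpow 2 (INR L * s)).
    { rewrite <- (rpow_pow_nat 2 L) by lra. apply rpow_rpow; lra. }
    assert (E2 : 2 ^ L = rpow 2 (INR L * w) * rpow 2 (INR L * s)).
    { rewrite !rpow_pos by lra. rewrite <- Rpower_plus.
      replace (INR L * w + INR L * s) with (INR L) by (unfold w; ring).
      rewrite Rpower_pow; lra. }
    assert (E3 : rpow 2 (INR L * w) = q ^ L).
    { unfold q. rewrite <- rpow_pow_nat by (apply rpow_gt0; lra). rewrite rpow_rpow by lra.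
      f_equal; ring. }
    assert (HCs : rpow C s <= C).
    { rewrite <- (rpow_1 C) at 2 by lra. apply rpow_le_base1; lra. }
    assert (HCs0 : 0 < rpow C s) by (apply rpow_gt0; lra).
    assert (HqL : 0 < q ^ L) by (apply pow_lt; lra).
    assert (H2s : 0 < rpow 2 (INR L * s)) by (apply rpow_gt0; lra).
    rewrite E1. rewrite E2 at 1. rewrite E3.
    replace (q ^ L * rpow 2 (INR L * s) * (/ rpow 2 (INR L * s) * / rpow C s))
      with (q ^ L / rpow C s) by (field; lra).
    unfold Rdiv. apply Rmult_le_compat_l; [lra|]. apply Rinv_le_contravar; [lra|].
    unfold C in *. nra. }
  destruct (INR_archimed (d ^ 3 / 50) (Rmax M 1)) as [n Hn].
  { apply Rmult_lt_0_compat; [apply pow_lt; lra|lra]. }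
  assert (Hn1 : (1 <= n)%nat).
  { destruct n; [simpl in Hn; pose proof (Rmax_r M 1); lra|lia]. }
  exists (3 * n)%nat. split; [lia|].
  eapply Rle_trans; [|apply Hlow; lia].
  assert (Hnr : 1 <= INR n) by (apply (le_INR 1); lia).
  assert (Hqn : INR n * d <= q ^ n).
  { replace q with (1 + d) by (unfold d; ring). pose proof (bernoulli d n ltac:(lra)). lra. }
  assert (E3n : q ^ (3 * n) = (q ^ n) ^ 3) by (rewrite <- pow_mult; f_equal; lia).
  rewrite E3n. rewrite mult_INR. simpl INR.
  assert (Hnd : 0 <= INR n * d) by nra.
  assert ((INR n * d) ^ 3 <= (q ^ n) ^ 3) by (apply pow_incr; lra).
  assert (Hden : 2 * ((1 + 1 + 1) * INR n + 2) ^ 2 <= 50 * INR n ^ 2) by nra.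
  assert (Hden0 : 0 < 2 * ((1 + 1 + 1) * INR n + 2) ^ 2) by nra.
  apply Rle_trans with ((INR n * d) ^ 3 / (50 * INR n ^ 2)).
  - replace ((INR n * d) ^ 3 / (50 * INR n ^ 2)) with (INR n * (d ^ 3 / 50)) by (field; lra).
    pose proof (Rmax_l M 1). lra.
  - unfold Rdiv. apply Rle_trans with ((q ^ n) ^ 3 * / (50 * INR n ^ 2)).
    + apply Rmult_le_compat_r; [left; apply Rinv_0_lt_compat; nra|lra].
    + apply Rmult_le_compat_l; [apply pow_le; lra|]. apply Rinv_le_contravar; lra.
Qed.

Lemma net_near p (E : seqR -> Prop) rho Xk y : is_net p E rho Xk -> E y ->
  exists x, Xk x /\ ldist p y x < rho.
Proof.
  intros [_ [_ H3]] Hy. specialize (H3 y Hy). unfold dist_set in H3.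
  destruct (classic (exists r, exists x, Xk x /\ r = ldist p y x)) as [Hne|Hemp].
  - destruct (einfR_fin (fun r => exists x, Xk x /\ r = ldist p y x) 0 Hne) as [m [Em [_ [_ Hlt]]]].
    + intros r [x [_ ->]]. apply ldist_ge0.
    + rewrite Em in H3. simpl in H3. destruct (Hlt rho H3) as [r [[x [Hx ->]] Hr]].
      exists x; auto.
  - exfalso. unfold einfR, einf in H3.
    destruct (excluded_middle_informative _) as [[r [r' [Hr' Er]]]|_].
    + apply Hemp. exists r'. exact Hr'.
    + exact H3.
Qed.

Lemma powerRZ_k k : powerRZ 2 (- Z.of_nat k) = / 2 ^ k.
Proof. rewrite powerRZ_neg', <- pow_powerRZ. reflexivity. Qed.

Definition uval (k j : nat) : R := INR j * 2 / 2 ^ k.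
Definition selP p (X : Z -> seqR -> Prop) (k j : nat) (x : seqR) : Prop :=
  X (Z.of_nat k) x /\ exists tau, 0 <= tau <= 1 /\ x = gc p tau /\ Rabs (tau - uval k j) < / 2 ^ k.
Definition sel p X k j : seqR := epsilon (inhabits vzero) (selP p X k j).

Lemma pow_pred k : (1 <= k)%nat -> 2 ^ k = 2 * 2 ^ (k - 1).
Proof. intros. destruct k; [lia|]. simpl. replace (k - 0)%nat with k by lia. reflexivity. Qed.

Lemma uval_bounds k j : (1 <= k)%nat -> (j < 2 ^ (k - 1))%nat -> 0 <= uval k j <= 1.
Proof.
  intros Hk Hj. unfold uval. rewrite (pow_pred k Hk).
  assert (H2 : 0 < 2 ^ (k - 1)) by (apply pow_lt; lra).
  assert (INR j + 1 <= 2 ^ (k - 1)).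
  { assert (H : (S j <= 2 ^ (k - 1))%nat) by lia. apply le_INR in H.
    rewrite S_INR, pow_INR in H. simpl in H. replace (1+1) with 2 in H by ring. exact H. }
  pose proof (pos_INR j). split.
  - apply Rmult_le_pos; [lra|left; apply Rinv_0_lt_compat; lra].
  - apply Rmult_le_reg_r with (2 * 2 ^ (k - 1)); [lra|]. unfold Rdiv.
    rewrite Rmult_assoc, Rinv_l by lra. lra.
Qed.

Lemma sel_spec p A X k j : 1 <= p -> is_MRF p (image01 (gc p)) A X -> (1 <= k)%nat ->
  (j < 2 ^ (k - 1))%nat -> selP p X k j (sel p X k j).
Proof.
  intros Hp [HA [Hnest Hnet]] Hk Hj. unfold sel. apply epsilon_spec.
  pose proof (uval_bounds k j Hk Hj) as Hu.
  specialize (Hnet (Z.of_nat k)). rewrite powerRZ_k in Hnet.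
  destruct (net_near p _ _ _ (gc p (uval k j)) Hnet) as [x [Hx Hd]].
  { exists (uval k j); auto. }
  destruct Hnet as [Hsub _]. destruct (Hsub x Hx) as [tau [Htau ->]].
  exists (gc p tau). split; [exact Hx|]. exists tau. split; [exact Htau|split; [reflexivity|]].
  pose proof (ldist_coord p (gc p (uval k j)) (gc p tau) 0%nat ltac:(lra)
    (gc_in_lp p _ Hp Hu) (gc_in_lp p _ Hp Htau)) as Hc.
  rewrite !gc_coord0 in Hc. rewrite Rabs_minus_sym. lra.
Qed.

Lemma sel_inj p A X k j1 j2 : 1 <= p -> is_MRF p (image01 (gc p)) A X -> (1 <= k)%nat ->
  (j1 < 2 ^ (k - 1))%nat -> (j2 < 2 ^ (k - 1))%nat -> sel p X k j1 = sel p X k j2 -> j1 = j2.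
Proof.
  intros Hp HM Hk Hj1 Hj2 E.
  destruct (sel_spec p A X k j1 Hp HM Hk Hj1) as [_ [t1 [_ [E1 H1]]]].
  destruct (sel_spec p A X k j2 Hp HM Hk Hj2) as [_ [t2 [_ [E2 H2]]]].
  rewrite E in E1. rewrite E1 in E2.
  assert (t1 = t2) by (apply (f_equal (fun x => x 0%nat)) in E2; exact E2). subst t2.
  assert (H2k : 0 < 2 ^ k) by (apply pow_lt; lra).
  assert (Hdu : Rabs (uval k j1 - uval k j2) < 2 / 2 ^ k).
  { replace (uval k j1 - uval k j2) with (- (t1 - uval k j1) + (t1 - uval k j2)) by ring.
    eapply Rle_lt_trans; [apply Rabs_triang|]. rewrite Rabs_Ropp. unfold Rdiv. lra. }
  unfold uval in Hdu.
  replace (INR j1 * 2 / 2 ^ k - INR j2 * 2 / 2 ^ k) with ((INR j1 - INR j2) * (2 / 2 ^ k))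
    in Hdu by (field; lra).
  rewrite Rabs_mult, (Rabs_right (2 / 2 ^ k)) in Hdu
    by (apply Rle_ge, Rmult_le_pos; [lra|left; apply Rinv_0_lt_compat; lra]).
  assert (Habs : Rabs (INR j1 - INR j2) < 1).
  { assert (0 < 2 / 2 ^ k) by (apply Rmult_lt_0_compat; [lra|apply Rinv_0_lt_compat; lra]). nra. }
  destruct (Nat.lt_total j1 j2) as [Hlt|[Heq|Hlt]]; [|exact Heq|].
  - apply lt_INR in Hlt. exfalso. assert (INR (S j1) <= INR j2) by (apply le_INR; apply INR_lt in Hlt; lia).
    rewrite S_INR in H. apply Rabs_def2 in Habs. lra.
  - apply lt_INR in Hlt. exfalso. assert (INR (S j2) <= INR j1) by (apply le_INR; apply INR_lt in Hlt; lia).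
    rewrite S_INR in H. apply Rabs_def2 in Habs. lra.
Qed.

Definition trm p A r (kx : Z * seqR) : R :=
  rpow (beta p (image01 (gc p)) (cball p (snd kx) (A * powerRZ 2 (- fst kx)))) r *
  er_real (diam p (cball p (snd kx) (A * powerRZ 2 (- fst kx)))).

Lemma trm_lower p A X r k j : 1 <= p -> is_MRF p (image01 (gc p)) A X -> (1 <= k)%nat ->
  (j < 2 ^ (k - 1))%nat -> 0 < r ->
  rpow (aseq p (k + 2) / (64 * PI * A)) r * (A / 2 ^ k) <= trm p A r (Z.of_nat k, sel p X k j).
Proof.
  intros Hp HM Hk Hj Hr.
  destruct (sel_spec p A X k j Hp HM Hk Hj) as [_ [tau [Htau [E _]]]].
  unfold trm. simpl fst; simpl snd. rewrite powerRZ_k, E.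
  apply level_term; auto. destruct HM as [HA _]; exact HA.
Qed.

Definition lev p X k : list (Z * seqR) := map (fun j => (Z.of_nat k, sel p X k j)) (seq 0 (2 ^ (k - 1))).

Lemma lsum_lower {I : Type} (g : I -> R) l T : (forall x, In x l -> T <= g x) ->
  INR (length l) * T <= lsum (map g l).
Proof.
  induction l as [|a l IH]; intros H; [unfold lsum; simpl; lra|].
  unfold lsum in *; cbn [length map fold_right]. rewrite S_INR.
  assert (T <= g a) by (apply H; left; auto).
  assert (INR (length l) * T <= fold_right Rplus 0 (map g l)) by (apply IH; intros; apply H; right; auto).
  lra.
Qed.

Lemma lev_sum p A X r k : 1 <= p -> is_MRF p (image01 (gc p)) A X -> (1 <= k)%nat -> 0 < r ->
  A / 2 * rpow (aseq p (k + 2) / (64 * PI * A)) r <= lsum (map (trm p A r) (lev p X k)).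
Proof.
  intros Hp HM Hk Hr.
  eapply Rle_trans; [|apply (lsum_lower _ _ (rpow (aseq p (k + 2) / (64 * PI * A)) r * (A / 2 ^ k)))].
  - unfold lev. rewrite length_map, length_seq, pow_INR. simpl INR. replace (1+1) with 2 by ring.
    rewrite (pow_pred k Hk). assert (0 < 2 ^ (k - 1)) by (apply pow_lt; lra).
    right. field. lra.
  - intros x Hx. unfold lev in Hx. apply in_map_iff in Hx. destruct Hx as [j [<- Hj]].
    apply in_seq in Hj. apply trm_lower; auto. lia.
Qed.

Fixpoint big p X (k0 n : nat) : list (Z * seqR) :=
  match n with
  | O => nil
  | S n' => lev p X k0 ++ big p X (S k0) n'
  end.

Lemma big_in p X k0 n x : In x (big p X k0 n) ->
  exists k j, (k0 <= k)%nat /\ (k < k0 + n)%nat /\ (j < 2 ^ (k - 1))%nat /\ x = (Z.of_nat k, sel p X k j).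
Proof.
  revert k0. induction n; intros k0 Hx; simpl in Hx; [contradiction|].
  apply in_app_or in Hx. destruct Hx as [Hx|Hx].
  - unfold lev in Hx. apply in_map_iff in Hx. destruct Hx as [j [<- Hj]]. apply in_seq in Hj.
    exists k0, j. repeat split; try lia.
  - destruct (IHn (S k0) Hx) as [k [j [H1 [H2 [H3 H4]]]]]. exists k, j. repeat split; auto; lia.
Qed.

Lemma big_nodup p A X k0 n : 1 <= p -> is_MRF p (image01 (gc p)) A X -> (1 <= k0)%nat ->
  NoDup (big p X k0 n).
Proof.
  intros Hp HM. revert k0. induction n; intros k0 Hk0; simpl; [constructor|].
  apply NoDup_app.
  - unfold lev. apply NoDup_map_NoDup_ForallPairs; [|apply seq_NoDup].
    intros j1 j2 Hj1 Hj2 E. apply in_seq in Hj1; apply in_seq in Hj2.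
    injection E as E. apply (sel_inj p A X k0 j1 j2); auto; lia.
  - apply IHn; lia.
  - intros x Hx Hx'. unfold lev in Hx. apply in_map_iff in Hx. destruct Hx as [j [<- _]].
    destruct (big_in p X (S k0) n _ Hx') as [k [j' [H1 [_ [_ H4]]]]].
    injection H4 as H4 _. apply Nat2Z.inj in H4. lia.
Qed.

Lemma big_forall p A X k0 n : 1 <= p -> is_MRF p (image01 (gc p)) A X -> (1 <= k0)%nat ->
  Forall (fun kx : Z * seqR => X (fst kx) (snd kx)) (big p X k0 n).
Proof.
  intros Hp HM Hk0. apply Forall_forall. intros x Hx.
  destruct (big_in p X k0 n x Hx) as [k [j [H1 [_ [H3 ->]]]]]. simpl.
  destruct (sel_spec p A X k j Hp HM ltac:(lia) H3) as [H _]. exact H.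
Qed.

Lemma big_sum_lower p A X r k0 n V :
  (forall k, (k0 <= k)%nat -> (k < k0 + n)%nat -> V <= lsum (map (trm p A r) (lev p X k))) ->
  INR n * V <= lsum (map (trm p A r) (big p X k0 n)).
Proof.
  revert k0. induction n; intros k0 H; [unfold lsum; simpl; lra|].
  cbn [big]. rewrite map_app, lsum_app, S_INR.
  assert (V <= lsum (map (trm p A r) (lev p X k0))) by (apply H; lia).
  assert (INR n * V <= lsum (map (trm p A r) (big p X (S k0) n))) by (apply IHn; intros; apply H; lia).
  lra.
Qed.

Lemma aseq_block p L k : (2 <= L)%nat -> (2 ^ L - 2 <= k)%nat -> (k < 2 ^ L - 2 + 2 ^ L)%nat ->
  aseq p (k + 2) = rpow (bval L) (/ p).
Proof.
  intros HL Hk1 Hk2. unfold aseq. f_equal.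
  assert (H4 : (4 <= 2 ^ L)%nat).
  { replace 4%nat with (2 ^ 2)%nat by reflexivity. apply Nat.pow_le_mono_r; lia. }
  assert (Hlog : Nat.log2 (k + 2) = L).
  { apply Nat.log2_unique; [lia|]. simpl. lia. }
  unfold bseq. destruct (Nat.eqb_spec (k + 2) 0); [lia|].
  unfold cb, bval. rewrite Hlog. pose proof (pos_INR L).
  assert (0 < 2 ^ L) by (apply pow_lt; lra). field. repeat split; lra.
Qed.

Lemma esum_inf p A X eps : 1 < p -> is_MRF p (image01 (gc p)) A X -> 0 < eps < p ->
  esum (fun kx : Z * seqR => X (fst kx) (snd kx))
    (fun kx => let Q := cball p (snd kx) (A * powerRZ 2 (- fst kx)) in
               Fin (rpow (beta p (image01 (gc p)) Q) (p - eps) * er_real (diam p Q))) = PInf.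
Proof.
  intros Hp HM Heps.
  set (r := p - eps).
  assert (Hr : 0 < r) by (unfold r; lra).
  assert (HA : 1 < A) by (destruct HM; auto).
  assert (Efold : forall l, fold_right er_add (Fin 0)
      (map (fun kx : Z * seqR => let Q := cball p (snd kx) (A * powerRZ 2 (- fst kx)) in
               Fin (rpow (beta p (image01 (gc p)) Q) r * er_real (diam p Q))) l)
      = Fin (lsum (map (trm p A r) l))).
  { intros l. exact (fold_fin (trm p A r) l). }
  unfold esum. apply esup_inf.
  - exists 0, nil. split; [constructor|split; [constructor|reflexivity]].
  - intros [M0 HM0].
    set (s := / p * r).
    assert (Hs : 0 < s < 1).
    { unfold s, r. split.
      - apply Rmult_lt_0_compat; [apply Rinv_0_lt_compat; lra|lra].
      - apply Rmult_lt_reg_l with p; [lra|]. rewrite <- Rmult_assoc, Rinv_r by lra. lra. }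
    pose proof PI_gt3.
    set (Cc := rpow (/ (64 * PI * A)) r).
    assert (HCc : 0 < Cc) by (apply rpow_gt0; apply Rinv_0_lt_compat; nra).
    set (K := A / 2 * Cc).
    assert (HK : 0 < K) by (unfold K; apply Rmult_lt_0_compat; lra).
    destruct (block_big s ((M0 + 1) / K) Hs) as [L [HL HLb]].
    assert (H4 : (4 <= 2 ^ L)%nat).
    { replace 4%nat with (2 ^ 2)%nat by reflexivity. apply Nat.pow_le_mono_r; lia. }
    set (l := big p X (2 ^ L - 2) (2 ^ L)).
    assert (Hin : fold_right er_add (Fin 0)
      (map (fun kx : Z * seqR => let Q := cball p (snd kx) (A * powerRZ 2 (- fst kx)) in
               Fin (rpow (beta p (image01 (gc p)) Q) r * er_real (diam p Q))) l)
      = Fin (lsum (map (trm p A r) l))) by apply Efold.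
    assert (Hle : lsum (map (trm p A r) l) <= M0).
    { apply HM0. exists l. split; [apply (big_nodup p A X); auto; [lra|lia]|].
      split; [apply (big_forall p A X); auto; [lra|lia]|]. symmetry. exact Hin. }
    assert (Hge : INR (2 ^ L) * (K * rpow (bval L) s) <= lsum (map (trm p A r) l)).
    { apply big_sum_lower. intros k Hk1 Hk2.
      eapply Rle_trans; [|apply lev_sum; auto; try lra; lia].
      rewrite (aseq_block p L k) by lia.
      unfold Rdiv. rewrite rpow_mul by (try apply rpow_ge0; left; apply Rinv_0_lt_compat; nra).
      rewrite rpow_rpow by (left; unfold bval; apply Rinv_0_lt_compat;
        pose proof (pos_INR L); assert (0 < 2 ^ L) by (apply pow_lt; lra);
        apply Rmult_lt_0_compat; [apply Rmult_lt_0_compat; [apply Rmult_lt_0_compat|]|]; lra).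
      unfold K, Cc, s. right. unfold Rdiv. ring. }
    rewrite pow_INR in Hge. simpl INR in Hge. replace (1+1) with 2 in Hge by ring.
    assert (K * ((M0 + 1) / K) = M0 + 1) by (field; lra).
    assert (K * ((M0 + 1) / K) <= K * (2 ^ L * rpow (bval L) s)) by (apply Rmult_le_compat_l; lra).
    lra.
Qed.

Theorem mainTheorem9 :
  forall p : R, 1 < p ->
  exists g : R -> seqR,
    is_curve_param p g /\
    er_lt (H1 p (image01 g)) PInf /\
    forall (A : R) (X : Z -> seqR -> Prop),
      is_MRF p (image01 g) A X ->
      forall eps : R, 0 < eps < p ->
        S_val p (image01 g) (p - eps) A X = PInf.
Proof.
  intros p Hp. exists (gc p). split; [apply gc_curve; lra|split; [apply H1_finite; lra|]].
  intros A X HM eps Heps. pose proof (esum_inf p A X eps Hp HM Heps) as He. unfold S_val.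
  match goal with |- er_add ?d ?e = _ => replace e with PInf by (symmetry; exact He) end.
  destruct (diam p (image01 (gc p))); reflexivity.
Qed.
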